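(* Let $\Bbbk$ be an algebraically closed field of characteristic zero and write $C_2\times C_2=\{e,g_1,g_2,g_3\}$; equip $\Bbbk(C_2\times C_2)$ with its group-algebra Frobenius structure. Then the extended structures $(\phi,\theta)$ on $\Bbbk(C_2\times C_2)$ are exactly those of the following forms, where $\{i,j,\ell\}=\{1,2,3\}$ and signs are chosen independently: (a) $\phi=\mathrm{id}$ and $\theta\in\{\pm2e,\ \pm2g_i,\ \pm(e+g_\ell)\pm(g_i-g_j),\ \pm(e-g_\ell)\pm(g_i+g_j)\}$; (b) $\phi(g_i)=-g_i$, $\phi(g_j)=-g_j$, $\phi(g_\ell)=g_\ell$, and $\theta=0$; (c) $\phi(g_i)=g_j$, $\phi(g_j)=g_i$, $\phi(g_\ell)=g_\ell$, and $\theta\in\{\pm(e+g_\ell),\pm(g_i+g_j)\}$; (d) $\phi(g_i)=-g_j$, $\phi(g_j)=-g_i$, $\phi(g_\ell)=g_\ell$, and $\theta\in\{\pm(e-g_\ell),\pm(g_i-g_j)\}$.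
   Context: For a finite group $G$ with identity $e$, $\Bbbk G$ carries the Frobenius structure with group-algebra multiplication, unit $e$, comultiplication $\Delta(g)=\sum_{h\in G}gh\otimes h^{-1}$ and counit $\varepsilon(g)=\delta_{g,e}$. A Frobenius algebra over $\Bbbk$ is $(A,m,u,\Delta,\varepsilon)$ with $(A,m,u)$ an associative unital algebra, $(A,\Delta,\varepsilon)$ a coassociative counital coalgebra, and $(a\otimes1)\Delta(b)=\Delta(ab)=\Delta(a)(1\otimes b)$. A Frobenius algebra morphism is both an algebra and coalgebra morphism. An extended structure is $(\phi,\theta)$, $\phi:A\to A$ linear, $\theta\in A$, with (i) $\phi$ a Frobenius morphism, $\phi^2=\mathrm{id}$; (ii) $\phi(\theta a)=\theta a$ for all $a$; (iii) $m(\phi\otimes\mathrm{id})\Delta(1_A)=\theta^2$. *)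

(* Defs.v *)
From HB Require Import structures.
From mathcomp Require Import all_boot all_order all_algebra.
Set Implicit Arguments. Unset Strict Implicit. Unset Printing Implicit Defensive.
Import Order.TTheory GRing.Theory.
Local Open Scope ring_scope.

(* The Klein four group C2 x C2, written additively: e = 0,
   g1 = (1,0), g2 = (0,1), g3 = (1,1). *)
Notation V := ('Z_2 * 'Z_2)%type.

Section GroupAlgebra.
Variable k : fieldType.

(* The group algebra k V, as finitely supported functions V -> k
   (coefficient vectors on the basis V). *)
Definition A := {ffun V -> k}.
(* A (x) A, identified with functions on V x V. *)
Definition AA := {ffun (V * V) -> k}.

Definition delta (g : V) : A := [ffun x : V => (x == g)%:R].
Definition sc (c : k) (a : A) : A := [ffun x : V => c * a x].
Definition scT (c : k) (t : AA) : AA := [ffun p : V * V => c * t p].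
Local Notation "c *: a" := (sc c a) : ring_scope.
Local Notation "c *:: t" := (scT c t) (at level 40) : ring_scope.

Definition tens (a b : A) : AA := [ffun p : V * V => a p.1 * b p.2].

(* multiplication: ([g] * [h]) = [g + h], extended bilinearly *)
Definition gmul (a b : A) : A := [ffun x : V => \sum_(y : V) a y * b (x - y)].
Definition gunit : A := delta 0.
Definition comul (a : A) : AA :=
  \sum_(g : V) a g *:: \sum_(h : V) tens (delta (g + h)) (delta (- h)).
Definition counit (a : A) : k := \sum_(g : V) a g * (g == 0)%:R.

Definition mT (t : AA) : A := \sum_(p : V * V) t p *: gmul (delta p.1) (delta p.2).
Definition tmap (f f' : A -> A) (t : AA) : AA :=
  \sum_(p : V * V) t p *:: tens (f (delta p.1)) (f' (delta p.2)).

Definition is_linear (f : A -> A) : Prop :=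
  forall (c : k) (a b : A), f (c *: a + b) = c *: f a + f b.

Definition frobenius_morphism (f : A -> A) : Prop :=
  [/\ is_linear f,
      (forall a b, f (gmul a b) = gmul (f a) (f b)),
      f gunit = gunit,
      (forall a, tmap f f (comul a) = comul (f a)) &
      (forall a, counit (f a) = counit a)].

Definition extended_structure (phi : A -> A) (theta : A) : Prop :=
  [/\ frobenius_morphism phi /\ (forall a, phi (phi a) = a),
      (forall a, phi (gmul theta a) = gmul theta a) &
      mT (tmap phi id (comul gunit)) = gmul theta theta].

Definition e : A := delta 0.
Definition gv (i : 'I_3) : V :=
  if val i == 0%N then (1, 0) else if val i == 1%N then (0, 1) else (1, 1).
(* g_1, g_2, g_3 indexed by 'I_3 = {0,1,2} *)
Definition gg (i : 'I_3) : A := delta (gv i).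

Definition sgn (b : bool) : k := (-1) ^+ b.

Definition theta_a (i j l : 'I_3) (theta : A) : Prop :=
  exists s t : bool,
    [\/ theta = sgn s *: (2%:R *: e),
        theta = sgn s *: (2%:R *: gg i),
        theta = sgn s *: (e + gg l) + sgn t *: (gg i - gg j) |
        theta = sgn s *: (e - gg l) + sgn t *: (gg i + gg j)].

Definition distinct3 (i j l : 'I_3) : Prop := [/\ i != j, j != l & i != l].

Definition lin_on_basis (phi : A -> A) (i j l : 'I_3) (pi pj pl : A) : Prop :=
  [/\ is_linear phi, phi e = e, phi (gg i) = pi, phi (gg j) = pj & phi (gg l) = pl].

Definition classification (phi : A -> A) (theta : A) : Prop :=
  ((forall a, phi a = a) /\ exists i j l, distinct3 i j l /\ theta_a i j l theta)
  \/
  (exists i j l, distinct3 i j l /\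
    [\/ lin_on_basis phi i j l (- gg i) (- gg j) (gg l) /\ theta = 0,
        lin_on_basis phi i j l (gg j) (gg i) (gg l) /\
          (exists s : bool, theta = sgn s *: (e + gg l) \/ theta = sgn s *: (gg i + gg j)) |
        lin_on_basis phi i j l (- gg j) (- gg i) (gg l) /\
          (exists s : bool, theta = sgn s *: (e - gg l) \/ theta = sgn s *: (gg i - gg j))]).

End GroupAlgebra.

(* Main.v *)
Require Import Defs.
From HB Require Import structures.
From mathcomp Require Import all_boot all_order all_algebra.
From mathcomp Require Import ring.
Set Implicit Arguments. Unset Strict Implicit. Unset Printing Implicit Defensive.
Import Order.TTheory GRing.Theory.
Local Open Scope ring_scope.


Definition v00 : V := (0,0).
Definition v10 : V := (1,0).
Definition v01 : V := (0,1).
Definition v11 : V := (1,1).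

Lemma V_cases (v : V) : [\/ v = v00, v = v10, v = v01 | v = v11].
Proof.
case: v => [[[|[|n]] Hn] [[|[|m]] Hm]] //.
- by constructor 1; congr pair; apply: val_inj.
- by constructor 3; congr pair; apply: val_inj.
- by constructor 2; congr pair; apply: val_inj.
- by constructor 4; congr pair; apply: val_inj.
Qed.

Lemma oppV (v : V) : - v = v.
Proof. by case: (V_cases v) => ->; apply/eqP. Qed.

Lemma eqV_add (a b c : V) : (a == b + c) = (b == a + c).
Proof.
by case: (V_cases a) => ->; case: (V_cases b) => ->; case: (V_cases c) => ->.
Qed.

Lemma eqV_add2 (x a b : V) : (x + a == b) = (x == a + b).
Proof.
by case: (V_cases a) => ->; case: (V_cases b) => ->; case: (V_cases x) => ->.
Qed.

Lemma addVV (v : V) : v + v = 0.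
Proof. by case: (V_cases v) => ->; apply/eqP. Qed.

Lemma add_v00_v00 : v00 + v00 = v00. Proof. by apply/eqP. Qed.
Lemma add_v00_v01 : v00 + v01 = v01. Proof. by apply/eqP. Qed.
Lemma add_v00_v10 : v00 + v10 = v10. Proof. by apply/eqP. Qed.
Lemma add_v00_v11 : v00 + v11 = v11. Proof. by apply/eqP. Qed.
Lemma add_v01_v00 : v01 + v00 = v01. Proof. by apply/eqP. Qed.
Lemma add_v01_v01 : v01 + v01 = v00. Proof. by apply/eqP. Qed.
Lemma add_v01_v10 : v01 + v10 = v11. Proof. by apply/eqP. Qed.
Lemma add_v01_v11 : v01 + v11 = v10. Proof. by apply/eqP. Qed.
Lemma add_v10_v00 : v10 + v00 = v10. Proof. by apply/eqP. Qed.
Lemma add_v10_v01 : v10 + v01 = v11. Proof. by apply/eqP. Qed.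
Lemma add_v10_v10 : v10 + v10 = v00. Proof. by apply/eqP. Qed.
Lemma add_v10_v11 : v10 + v11 = v01. Proof. by apply/eqP. Qed.
Lemma add_v11_v00 : v11 + v00 = v11. Proof. by apply/eqP. Qed.
Lemma add_v11_v01 : v11 + v01 = v10. Proof. by apply/eqP. Qed.
Lemma add_v11_v10 : v11 + v10 = v01. Proof. by apply/eqP. Qed.
Lemma add_v11_v11 : v11 + v11 = v00. Proof. by apply/eqP. Qed.
Definition addtab := (add_v00_v00, add_v00_v01, add_v00_v10, add_v00_v11, add_v01_v00, add_v01_v01, add_v01_v10, add_v01_v11, add_v10_v00, add_v10_v01, add_v10_v10, add_v10_v11, add_v11_v00, add_v11_v01, add_v11_v10, add_v11_v11).

Section S.
Variable k : fieldType.
Local Notation A := (A k).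
Local Notation d := (delta k).

Lemma sumV (F : V -> k) : \sum_(v : V) F v = F v00 + F v01 + F v10 + F v11.
Proof.
rewrite (eq_bigr (fun p : V => F (p.1,p.2))); last by case.
rewrite -(pair_big predT predT (fun a b => F (a,b))) /= !big_ord_recl !big_ord0 /=.
rewrite !addr0 !addrA.
congr (F _ + F _ + F _ + F _); by congr pair; apply: val_inj.
Qed.

Lemma sumVV (F : V * V -> k) : \sum_(p : V * V) F p = \sum_(a : V) \sum_(b : V) F (a, b).
Proof.
rewrite (eq_bigr (fun p : V * V => F (p.1,p.2))); last by case.
by rewrite -(pair_big predT predT (fun a b => F (a,b))).
Qed.

Lemma A_ext (a b : A) : a v00 = b v00 -> a v01 = b v01 -> a v10 = b v10 ->
  a v11 = b v11 -> a = b.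
Proof.
move=> h1 h2 h3 h4; apply/ffunP => v; by case: (V_cases v) => ->.
Qed.

Lemma sum_deltaL (F : V -> k) a : \sum_v (v == a)%:R * F v = F a.
Proof.
rewrite (bigD1 a) //= eqxx mul1r big1 ?addr0 // => v /negbTE ->; by rewrite mul0r.
Qed.

Lemma sum_deltaR (F : V -> k) a : \sum_v (a == v)%:R * F v = F a.
Proof. rewrite -(sum_deltaL F a); apply: eq_bigr => v _; by rewrite eq_sym. Qed.

Lemma dE v x : d v x = (x == v)%:R.
Proof. by rewrite ffunE. Qed.

Lemma scE c (a : A) x : sc c a x = c * a x.
Proof. by rewrite ffunE. Qed.

Lemma gmulE (a b : A) x : gmul a b x = \sum_y a y * b (x - y).
Proof. by rewrite ffunE. Qed.

Lemma counitE (a : A) : counit a = a 0.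
Proof.
rewrite /counit (eq_bigr (fun g => (g == 0)%:R * a g)) ?sum_deltaL //.
by move=> g _; rewrite mulrC.
Qed.

Section Lin.
Variable f : A -> A.
Hypothesis hf : is_linear f.

Lemma lin0 : f 0 = 0.
Proof.
have h := hf (-1) 0 0.
have e1 : sc (-1) (0 : A) + 0 = 0 by apply/ffunP => x; rewrite !ffunE; ring.
rewrite e1 in h; rewrite h; apply/ffunP => x; rewrite !ffunE; ring.
Qed.

Lemma linD a b : f (a + b) = f a + f b.
Proof.
have e1 : a = sc 1 a by apply/ffunP => x; rewrite !ffunE mul1r.
rewrite {1}e1 hf; congr (_ + _); apply/ffunP => x; by rewrite !ffunE mul1r.
Qed.

Lemma linZ c a : f (sc c a) = sc c (f a).
Proof. by rewrite -[sc c a]addr0 hf lin0 addr0. Qed.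

Lemma lin_decomp a x : f a x = \sum_v a v * f (d v) x.
Proof.
have ea : a = \sum_v sc (a v) (d v).
  apply/ffunP => y; rewrite sum_ffunE.
  rewrite (eq_bigr (fun v => (y == v)%:R * a v)) ?sum_deltaR //.
  by move=> v _; rewrite !ffunE mulrC.
rewrite {1}ea (big_morph f linD lin0) sum_ffunE.
by apply: eq_bigr => v _; rewrite linZ ffunE.
Qed.
End Lin.

Lemma comulE (a : A) q : comul a q = a (q.1 + q.2).
Proof.
rewrite /comul sum_ffunE.
rewrite (eq_bigr (fun g => (g == q.1 + q.2)%:R * a g)) ?sum_deltaL //.
move=> g _; rewrite ffunE sum_ffunE.
rewrite (eq_bigr (fun h => (q.2 == h)%:R * (q.1 == g + h)%:R)).
  by rewrite sum_deltaR eqV_add mulrC.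
by move=> h _; rewrite !ffunE oppV mulrC.
Qed.

Lemma tmapE (f g : A -> A) (t : AA k) p :
  tmap f g t p = \sum_q t q * (f (d q.1) p.1 * g (d q.2) p.2).
Proof. rewrite /tmap sum_ffunE; apply: eq_bigr => q _; by rewrite !ffunE. Qed.

Lemma gmul_dd a b : gmul (d a) (d b) = d (a + b).
Proof.
apply/ffunP => x; rewrite !ffunE.
rewrite (eq_bigr (fun y => (y == a)%:R * (x - y == b)%:R)) ?sum_deltaL.
  by rewrite oppV eqV_add2.
by move=> y _; rewrite !ffunE.
Qed.

Lemma mTE (t : AA k) x : mT t x = \sum_p t p * (x == p.1 + p.2)%:R.
Proof.
rewrite /mT sum_ffunE; apply: eq_bigr => p _; by rewrite ffunE gmul_dd ffunE.
Qed.

Lemma rhsE (f : A -> A) x :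
  mT (tmap f id (comul (gunit k))) x = \sum_v f (d v) (x + v).
Proof.
rewrite mTE sumVV /= exchange_big /=; apply: eq_bigr => v _.
rewrite (eq_bigr (fun u => (x + v == u)%:R * f (d v) u)) ?sum_deltaR //.
move=> u _; rewrite tmapE sumVV /=.
rewrite (eq_bigr (fun q1 => (q1 == v)%:R * f (d q1) u)).
  rewrite sum_deltaL mulrC; congr (_ * _); by rewrite eqV_add2 addrC.
move=> q1 _.
rewrite (eq_bigr (fun q2 => (v == q2)%:R * (comul (gunit k) (q1, q2) * f (d q1) u))).
  by rewrite sum_deltaR comulE /= /gunit dE eqV_add2 addr0.
move=> q2 _; rewrite /= dE; ring.
Qed.

Section Psi.
Variables (pi : V -> V) (chi : V -> k).
Hypothesis hinv : forall v, pi (pi v) = v.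
Hypothesis hadd : forall a b, pi (a + b) = pi a + pi b.
Hypothesis hchiD : forall a b, chi (a + b) = chi a * chi b.
Hypothesis hchi2 : forall v, chi v * chi v = 1.
Hypothesis hchipi : forall v, chi (pi v) = chi v.

Lemma pi0 : pi 0 = 0.
Proof. by have := hadd 0 0; rewrite addr0 addVV. Qed.

Lemma chi0 : chi 0 = 1.
Proof. by rewrite -(hchi2 0) -hchiD addr0. Qed.

Variable f : A -> A.
Hypothesis hf : is_linear f.
Hypothesis hfd : forall v, f (d v) = sc (chi v) (d (pi v)).

Lemma psiE a x : f a x = chi (pi x) * a (pi x).
Proof.
rewrite (lin_decomp hf).
rewrite (eq_bigr (fun v => (v == pi x)%:R * (a v * chi v))).
  by rewrite sum_deltaL mulrC.
move=> v _; rewrite hfd !ffunE.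
have -> : (x == pi v) = (v == pi x).
  by apply/eqP/eqP => [->|->]; rewrite hinv.
ring.
Qed.

Lemma aux_ring (c X a b : k) : c * c = 1 -> c * a * (X * c) * b = X * (a * b).
Proof.
move=> h; transitivity (X * (a * b) * (c * c)); first ring.
by rewrite h mulr1.
Qed.

Lemma psi_frob : frobenius_morphism f /\ (forall a, f (f a) = a).
Proof.
split; last first.
  move=> a; apply/ffunP => x; rewrite !psiE hinv hchipi.
  by rewrite mulrA hchi2 mul1r.
split => //.
- move=> a b; apply/ffunP => x; rewrite psiE !gmulE mulr_sumr.
  rewrite (reindex_inj (can_inj hinv)) /=.
  apply: eq_bigr => y _; rewrite !psiE !oppV hadd hchiD.
  transitivity (chi (pi x) * (a (pi y) * b (pi x + pi y)) * (chi (pi y) * chi (pi y))).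
    by rewrite hchi2 mulr1.
  ring.
- apply/ffunP => x; rewrite psiE /gunit !dE.
  have -> : (pi x == 0) = (x == 0).
    by apply/eqP/eqP => [h|->]; [rewrite -(hinv x) h pi0 | rewrite pi0].
  by case: eqP => [->|_]; rewrite ?pi0 ?chi0 ?mulr0 ?mulr1.
- move=> a; apply/ffunP => p; rewrite tmapE comulE sumVV.
  rewrite psiE hadd hchiD.
  rewrite (eq_bigr (fun q1 => (q1 == pi p.1)%:R * (chi (pi p.1) * (a (q1 + pi p.2) * chi (pi p.2))))).
    by rewrite sum_deltaL; ring.
  move=> q1 _.
  rewrite (eq_bigr (fun q2 => (q2 == pi p.2)%:R * ((pi p.1 == q1)%:R * (chi (pi p.1) * (a (q1 + q2) * chi (pi p.2)))))).
    by rewrite sum_deltaL eq_sym.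
  by move=> q2 _; rewrite comulE !psiE !dE /= (eq_sym q2); ring.
- move=> a; rewrite !counitE psiE pi0 chi0 mul1r //.
Qed.
End Psi.
End S.


Section T.
Variable k : fieldType.
Hypothesis h2 : (2 : k) != 0.
Local Notation A := (A k).
Local Notation d := (delta k).

Lemma ptE (a b : A) v : a = b -> a v = b v. Proof. by move->. Qed.

Lemma sq1 (x : k) : x * x = 1 -> x = 1 \/ x = -1.
Proof.
move=> h; have : (x - 1) * (x + 1) = 0.
  have -> : (x - 1) * (x + 1) = x * x - 1 by ring.
  by rewrite h subrr.
move/eqP; rewrite mulf_eq0 => /orP [/eqP h'|/eqP h'].
- left; by apply/eqP; rewrite -subr_eq0 h'.
- right; by apply/eqP; rewrite -subr_eq0 opprK h'.
Qed.

Lemma two_mul0 (x : k) : 2 * x = 0 -> x = 0.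
Proof. by move/eqP; rewrite mulf_eq0 (negbTE h2) => /eqP. Qed.

Lemma sq_e (x : A) : gmul x x = d v00 -> x v00 = 0 ->
  exists s, [\/ x = sc (sgn k s) (d v10), x = sc (sgn k s) (d v01) | x = sc (sgn k s) (d v11)].
Proof.
move=> hx h0.
have e00 := ptE v00 hx; have e01 := ptE v01 hx.
have e10 := ptE v10 hx; have e11 := ptE v11 hx.
move: e00 e01 e10 e11; rewrite /= !gmulE !sumV !dE !oppV !addtab /= h0.
set b := x v10; set c := x v01; set dd := x v11.
move=> E0 E1 E2 E3.
have P1 : b * dd = 0 by apply: two_mul0; rewrite -[RHS]E1 /=; ring.
have P2 : c * dd = 0 by apply: two_mul0; rewrite -[RHS]E2 /=; ring.
have P3 : c * b = 0 by apply: two_mul0; rewrite -[RHS]E3 /=; ring.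
have S : b * b + c * c + dd * dd = 1 by rewrite -[RHS]E0 /=; ring.
have mk : forall (w : V) (s : bool), x w = sgn k s -> (forall u, u != w -> x u = 0) ->
    x = sc (sgn k s) (d w).
  move=> w s hw hu; apply/ffunP => u; rewrite !ffunE.
  case: (eqVneq u w) => [->|/hu ->]; by rewrite ?hw ?mulr1 ?mulr0.
have pm : forall y : k, y * y = 1 -> exists s, y = sgn k s.
  by move=> y /sq1 [->|->]; [exists false | exists true]; rewrite /sgn /= ?expr0 ?expr1.
have Z : forall y z : k, y * z = 0 -> y = 0 \/ z = 0.
  by move=> y z /eqP; rewrite mulf_eq0 => /orP [/eqP|/eqP]; auto.
have uE : forall u : V, [\/ u = v00, u = v01, u = v10 | u = v11].
  by move=> u; case: (V_cases u) => ->; [constructor 1|constructor 3|constructor 2|constructor 4].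
case: (Z _ _ P3) => [hc|hb].
- case: (Z _ _ P1) => [hb|hd].
  + rewrite hc hb !mul0r !add0r in S; have [s hs] := pm _ S.
    exists s; constructor 3; apply: mk => // u.
    by case: (uE u) => ->; rewrite //= ?h0 ?hc ?hb.
  + rewrite hc hd !mul0r !addr0 in S; have [s hs] := pm _ S.
    exists s; constructor 1; apply: mk => // u.
    by case: (uE u) => ->; rewrite //= ?h0 ?hc ?hd.
- case: (Z _ _ P2) => [hc|hd].
  + rewrite hc hb !mul0r !add0r in S; have [s hs] := pm _ S.
    exists s; constructor 3; apply: mk => // u.
    by case: (uE u) => ->; rewrite //= ?h0 ?hc ?hb.
  + rewrite hb hd !mul0r !addr0 add0r in S; have [s hs] := pm _ S.
    exists s; constructor 2; apply: mk => // u.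
    by case: (uE u) => ->; rewrite //= ?h0 ?hb ?hd.
Qed.

Definition U0 (a : A) := a v00 + a v01 + a v10 + a v11.
Definition U1 (a : A) := a v00 + a v01 - a v10 - a v11.
Definition U2 (a : A) := a v00 - a v01 + a v10 - a v11.
Definition U3 (a : A) := a v00 - a v01 - a v10 + a v11.

Lemma Usq (a : A) : [/\ U0 (gmul a a) = U0 a * U0 a, U1 (gmul a a) = U1 a * U1 a,
  U2 (gmul a a) = U2 a * U2 a & U3 (gmul a a) = U3 a * U3 a].
Proof. rewrite /U0 /U1 /U2 /U3 !gmulE !sumV !oppV !addtab; split; ring. Qed.

Lemma U_inj (a b : A) : U0 a = U0 b -> U1 a = U1 b -> U2 a = U2 b -> U3 a = U3 b -> a = b.
Proof.
rewrite /U0 /U1 /U2 /U3 => h0 h1 h2' h3.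
have h4 : (4 : k) != 0.
  have -> : (4 : k) = 2 * 2 by rewrite -natrM.
  by rewrite mulf_eq0 negb_or h2.
have key : forall x y : k, 4 * x = 4 * y -> x = y.
  by move=> x y /eqP; rewrite -subr_eq0 -mulrBr mulf_eq0 (negbTE h4) subr_eq0 => /eqP.
apply: A_ext; apply: key.
- transitivity (U0 a + U1 a + U2 a + U3 a); first by rewrite /U0 /U1 /U2 /U3; ring.
  rewrite /U0 /U1 /U2 /U3 h0 h1 h2' h3; ring.
- transitivity (U0 a + U1 a - U2 a - U3 a); first by rewrite /U0 /U1 /U2 /U3; ring.
  rewrite /U0 /U1 /U2 /U3 h0 h1 h2' h3; ring.
- transitivity (U0 a - U1 a + U2 a - U3 a); first by rewrite /U0 /U1 /U2 /U3; ring.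
  rewrite /U0 /U1 /U2 /U3 h0 h1 h2' h3; ring.
- transitivity (U0 a - U1 a - U2 a + U3 a); first by rewrite /U0 /U1 /U2 /U3; ring.
  rewrite /U0 /U1 /U2 /U3 h0 h1 h2' h3; ring.
Qed.

Lemma sq4 (x : k) : x * x = 4 -> exists s, x = 2 * sgn k s.
Proof.
move=> h; have : (x - 2) * (x + 2) = 0.
  have -> : (x - 2) * (x + 2) = x * x - 4 by ring.
  by rewrite h subrr.
move/eqP; rewrite mulf_eq0 => /orP [/eqP h'|/eqP h'].
- exists false; rewrite /sgn expr0 mulr1; by apply/eqP; rewrite -subr_eq0 h'.
- exists true; rewrite /sgn expr1 mulrN1; by apply/eqP; rewrite -subr_eq0 opprK h'.
Qed.

Lemma sq0 (x : k) : x * x = 0 -> x = 0.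
Proof. by move/eqP; rewrite mulf_eq0 orbb => /eqP. Qed.

Lemma sgnT : sgn k true = -1. Proof. by rewrite /sgn expr1. Qed.
Lemma sgnF : sgn k false = 1. Proof. by rewrite /sgn expr0. Qed.
Lemma sc1 (a : A) : sc 1 a = a. Proof. by apply/ffunP => x; rewrite ffunE mul1r. Qed.
Lemma scN1 (a : A) : sc (-1) a = - a. Proof. by apply/ffunP => x; rewrite !ffunE mulN1r. Qed.

Lemma nz1 : (1 : k) = 0 -> False. Proof. by move/eqP; rewrite oner_eq0. Qed.
Lemma nzN1 : (-1 : k) = 0 -> False. Proof. by move/eqP; rewrite oppr_eq0 oner_eq0. Qed.
Lemma N1_1 : (-1 : k) = 1 -> False.
Proof.
move=> h; move: h2; have -> : (2 : k) = 1 - (-1) by ring.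
by rewrite h subrr eqxx.
Qed.

Lemma testE (a b : A) x : (a + b) x = a x + b x /\ (- a) x = - a x /\ (a - b) x = a x - b x.
Proof. by rewrite !ffunE. Qed.

Definition piS (a b : V) (v : V) : V := if v == a then b else if v == b then a else v.
Definition chiL (l : V) (v : V) : k := if (v == v00) || (v == l) then 1 else -1.
Definition chi1 (v : V) : k := 1.

Lemma gmul_scd c c' u w : gmul (sc c (d u)) (sc c' (d w)) = sc (c * c') (d (u + w)).
Proof.
apply/ffunP => x; rewrite !ffunE.
rewrite (eq_bigr (fun y => (y == u)%:R * (c * (c' * (x - y == w)%:R)))).
  rewrite sum_deltaL oppV eqV_add2; ring.
by move=> y _; rewrite !ffunE; ring.
Qed.

Lemma id_hyps : [/\ (forall v : V, id (id v) = v), (forall a b : V, id (a + b) = id a + id b),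
  (forall a b, chi1 (a + b) = chi1 a * chi1 b), (forall v, chi1 v * chi1 v = 1) &
  (forall v, chi1 (id v) = chi1 v)].
Proof. by split => *; rewrite /chi1 ?mulr1. Qed.

Lemma swap_hyps_v01_v10 : [/\ (forall v : V, piS v01 v10 (piS v01 v10 v) = v),
  (forall x y : V, piS v01 v10 (x + y) = piS v01 v10 x + piS v01 v10 y),
  (forall v, chiL v11 (piS v01 v10 v) = chiL v11 v) &
  (forall v, chi1 (piS v01 v10 v) = chi1 v)].
Proof.
split.
- by move=> v; case: (V_cases v) => ->.
- by move=> x y; case: (V_cases x) => ->; case: (V_cases y) => ->; rewrite addtab /piS /= ?addtab.
- by move=> v; case: (V_cases v) => ->.
- by [].
Qed.

Lemma swap_hyps_v01_v11 : [/\ (forall v : V, piS v01 v11 (piS v01 v11 v) = v),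
  (forall x y : V, piS v01 v11 (x + y) = piS v01 v11 x + piS v01 v11 y),
  (forall v, chiL v10 (piS v01 v11 v) = chiL v10 v) &
  (forall v, chi1 (piS v01 v11 v) = chi1 v)].
Proof.
split.
- by move=> v; case: (V_cases v) => ->.
- by move=> x y; case: (V_cases x) => ->; case: (V_cases y) => ->; rewrite addtab /piS /= ?addtab.
- by move=> v; case: (V_cases v) => ->.
- by [].
Qed.

Lemma swap_hyps_v10_v11 : [/\ (forall v : V, piS v10 v11 (piS v10 v11 v) = v),
  (forall x y : V, piS v10 v11 (x + y) = piS v10 v11 x + piS v10 v11 y),
  (forall v, chiL v01 (piS v10 v11 v) = chiL v01 v) &
  (forall v, chi1 (piS v10 v11 v) = chi1 v)].
Proof.
split.
- by move=> v; case: (V_cases v) => ->.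
- by move=> x y; case: (V_cases x) => ->; case: (V_cases y) => ->; rewrite addtab /piS /= ?addtab.
- by move=> v; case: (V_cases v) => ->.
- by [].
Qed.

Lemma chiL_hyps_v01 : [/\ (forall x y, chiL v01 (x + y) = chiL v01 x * chiL v01 y),
  (forall v, chiL v01 v * chiL v01 v = 1) & (forall v : V, chiL v01 (id v) = chiL v01 v)].
Proof.
split.
- by move=> x y; case: (V_cases x) => ->; case: (V_cases y) => ->; rewrite addtab /chiL /=; ring.
- by move=> v; case: (V_cases v) => ->; rewrite /chiL /=; ring.
- by [].
Qed.

Lemma chiL_hyps_v10 : [/\ (forall x y, chiL v10 (x + y) = chiL v10 x * chiL v10 y),
  (forall v, chiL v10 v * chiL v10 v = 1) & (forall v : V, chiL v10 (id v) = chiL v10 v)].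
Proof.
split.
- by move=> x y; case: (V_cases x) => ->; case: (V_cases y) => ->; rewrite addtab /chiL /=; ring.
- by move=> v; case: (V_cases v) => ->; rewrite /chiL /=; ring.
- by [].
Qed.

Lemma chiL_hyps_v11 : [/\ (forall x y, chiL v11 (x + y) = chiL v11 x * chiL v11 y),
  (forall v, chiL v11 v * chiL v11 v = 1) & (forall v : V, chiL v11 (id v) = chiL v11 v)].
Proof.
split.
- by move=> x y; case: (V_cases x) => ->; case: (V_cases y) => ->; rewrite addtab /chiL /=; ring.
- by move=> v; case: (V_cases v) => ->; rewrite /chiL /=; ring.
- by [].
Qed.

Lemma U0D (a b : A) : U0 (a + b) = U0 a + U0 b. Proof. rewrite /U0 !ffunE; ring. Qed.
Lemma U0N (a : A) : U0 (- a) = - U0 a. Proof. rewrite /U0 !ffunE; ring. Qed.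
Lemma U0Z c (a : A) : U0 (sc c a) = c * U0 a. Proof. rewrite /U0 !ffunE; ring. Qed.
Lemma U00 : U0 (0 : A) = 0. Proof. rewrite /U0 !ffunE; ring. Qed.
Lemma U0M (a b : A) : U0 (gmul a b) = U0 a * U0 b. Proof. rewrite /U0 !gmulE !sumV !oppV !addtab; ring. Qed.
Lemma U0_v00 : U0 (d v00) = 1. Proof. rewrite /U0 !ffunE /=; ring. Qed.
Lemma U0_v01 : U0 (d v01) = 1. Proof. rewrite /U0 !ffunE /=; ring. Qed.
Lemma U0_v10 : U0 (d v10) = 1. Proof. rewrite /U0 !ffunE /=; ring. Qed.
Lemma U0_v11 : U0 (d v11) = 1. Proof. rewrite /U0 !ffunE /=; ring. Qed.
Lemma U0rhs (f : A -> A) : U0 (mT (tmap f id (comul (gunit k)))) = U0 (f (d v00)) + U0 (f (d v01)) + U0 (f (d v10)) + U0 (f (d v11)).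
Proof. rewrite /U0 !rhsE !sumV !addtab; ring. Qed.
Lemma U0lin (f : A -> A) : is_linear f -> forall c, U0 (f c) = c v00 * U0 (f (d v00)) + c v01 * U0 (f (d v01)) + c v10 * U0 (f (d v10)) + c v11 * U0 (f (d v11)).
Proof. move=> hf c; rewrite /U0 !(lin_decomp hf c) !sumV; ring. Qed.
Lemma U1D (a b : A) : U1 (a + b) = U1 a + U1 b. Proof. rewrite /U1 !ffunE; ring. Qed.
Lemma U1N (a : A) : U1 (- a) = - U1 a. Proof. rewrite /U1 !ffunE; ring. Qed.
Lemma U1Z c (a : A) : U1 (sc c a) = c * U1 a. Proof. rewrite /U1 !ffunE; ring. Qed.
Lemma U10 : U1 (0 : A) = 0. Proof. rewrite /U1 !ffunE; ring. Qed.
Lemma U1M (a b : A) : U1 (gmul a b) = U1 a * U1 b. Proof. rewrite /U1 !gmulE !sumV !oppV !addtab; ring. Qed.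
Lemma U1_v00 : U1 (d v00) = 1. Proof. rewrite /U1 !ffunE /=; ring. Qed.
Lemma U1_v01 : U1 (d v01) = 1. Proof. rewrite /U1 !ffunE /=; ring. Qed.
Lemma U1_v10 : U1 (d v10) = -1. Proof. rewrite /U1 !ffunE /=; ring. Qed.
Lemma U1_v11 : U1 (d v11) = -1. Proof. rewrite /U1 !ffunE /=; ring. Qed.
Lemma U1rhs (f : A -> A) : U1 (mT (tmap f id (comul (gunit k)))) = U1 (f (d v00)) + U1 (f (d v01)) - U1 (f (d v10)) - U1 (f (d v11)).
Proof. rewrite /U1 !rhsE !sumV !addtab; ring. Qed.
Lemma U1lin (f : A -> A) : is_linear f -> forall c, U1 (f c) = c v00 * U1 (f (d v00)) + c v01 * U1 (f (d v01)) + c v10 * U1 (f (d v10)) + c v11 * U1 (f (d v11)).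
Proof. move=> hf c; rewrite /U1 !(lin_decomp hf c) !sumV; ring. Qed.
Lemma U2D (a b : A) : U2 (a + b) = U2 a + U2 b. Proof. rewrite /U2 !ffunE; ring. Qed.
Lemma U2N (a : A) : U2 (- a) = - U2 a. Proof. rewrite /U2 !ffunE; ring. Qed.
Lemma U2Z c (a : A) : U2 (sc c a) = c * U2 a. Proof. rewrite /U2 !ffunE; ring. Qed.
Lemma U20 : U2 (0 : A) = 0. Proof. rewrite /U2 !ffunE; ring. Qed.
Lemma U2M (a b : A) : U2 (gmul a b) = U2 a * U2 b. Proof. rewrite /U2 !gmulE !sumV !oppV !addtab; ring. Qed.
Lemma U2_v00 : U2 (d v00) = 1. Proof. rewrite /U2 !ffunE /=; ring. Qed.
Lemma U2_v01 : U2 (d v01) = -1. Proof. rewrite /U2 !ffunE /=; ring. Qed.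
Lemma U2_v10 : U2 (d v10) = 1. Proof. rewrite /U2 !ffunE /=; ring. Qed.
Lemma U2_v11 : U2 (d v11) = -1. Proof. rewrite /U2 !ffunE /=; ring. Qed.
Lemma U2rhs (f : A -> A) : U2 (mT (tmap f id (comul (gunit k)))) = U2 (f (d v00)) - U2 (f (d v01)) + U2 (f (d v10)) - U2 (f (d v11)).
Proof. rewrite /U2 !rhsE !sumV !addtab; ring. Qed.
Lemma U2lin (f : A -> A) : is_linear f -> forall c, U2 (f c) = c v00 * U2 (f (d v00)) + c v01 * U2 (f (d v01)) + c v10 * U2 (f (d v10)) + c v11 * U2 (f (d v11)).
Proof. move=> hf c; rewrite /U2 !(lin_decomp hf c) !sumV; ring. Qed.
Lemma U3D (a b : A) : U3 (a + b) = U3 a + U3 b. Proof. rewrite /U3 !ffunE; ring. Qed.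
Lemma U3N (a : A) : U3 (- a) = - U3 a. Proof. rewrite /U3 !ffunE; ring. Qed.
Lemma U3Z c (a : A) : U3 (sc c a) = c * U3 a. Proof. rewrite /U3 !ffunE; ring. Qed.
Lemma U30 : U3 (0 : A) = 0. Proof. rewrite /U3 !ffunE; ring. Qed.
Lemma U3M (a b : A) : U3 (gmul a b) = U3 a * U3 b. Proof. rewrite /U3 !gmulE !sumV !oppV !addtab; ring. Qed.
Lemma U3_v00 : U3 (d v00) = 1. Proof. rewrite /U3 !ffunE /=; ring. Qed.
Lemma U3_v01 : U3 (d v01) = -1. Proof. rewrite /U3 !ffunE /=; ring. Qed.
Lemma U3_v10 : U3 (d v10) = -1. Proof. rewrite /U3 !ffunE /=; ring. Qed.
Lemma U3_v11 : U3 (d v11) = 1. Proof. rewrite /U3 !ffunE /=; ring. Qed.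
Lemma U3rhs (f : A -> A) : U3 (mT (tmap f id (comul (gunit k)))) = U3 (f (d v00)) - U3 (f (d v01)) - U3 (f (d v10)) + U3 (f (d v11)).
Proof. rewrite /U3 !rhsE !sumV !addtab; ring. Qed.
Lemma U3lin (f : A -> A) : is_linear f -> forall c, U3 (f c) = c v00 * U3 (f (d v00)) + c v01 * U3 (f (d v01)) + c v10 * U3 (f (d v10)) + c v11 * U3 (f (d v11)).
Proof. move=> hf c; rewrite /U3 !(lin_decomp hf c) !sumV; ring. Qed.
Definition UE := (U0D, U0N, U0Z, U00, U0_v00, U0_v01, U0_v10, U0_v11, U1D, U1N, U1Z, U10, U1_v00, U1_v01, U1_v10, U1_v11, U2D, U2N, U2Z, U20, U2_v00, U2_v01, U2_v10, U2_v11, U3D, U3N, U3Z, U30, U3_v00, U3_v01, U3_v10, U3_v11).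
End T.


Definition i0 : 'I_3 := @Ordinal 3 0 isT.
Definition i1 : 'I_3 := @Ordinal 3 1 isT.
Definition i2 : 'I_3 := @Ordinal 3 2 isT.

Lemma I3_cases (i : 'I_3) : [\/ i = i0, i = i1 | i = i2].
Proof.
case: i => [[|[|[|n]]] Hn] //.
- by constructor 1; apply: val_inj.
- by constructor 2; apply: val_inj.
- by constructor 3; apply: val_inj.
Qed.

Section U.
Variable k : fieldType.
Hypothesis h2 : (2 : k) != 0.
Local Notation A := (A k).
Local Notation d := (delta k).

Lemma gg0 : gg k i0 = d v10. Proof. by []. Qed.
Lemma gg1 : gg k i1 = d v01. Proof. by []. Qed.
Lemma gg2 : gg k i2 = d v11. Proof. by []. Qed.
Lemma eE : e k = d v00. Proof. by []. Qed.
Definition ggE := (gg0, gg1, gg2, eE).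

Lemma sgnTT : sgn k true * sgn k true = 1. Proof. by rewrite /sgn expr1 mulrNN mulr1. Qed.
Lemma sgnTF : sgn k true * sgn k false = -1. Proof. by rewrite /sgn expr1 expr0 mulr1. Qed.
Lemma sgnFT : sgn k false * sgn k true = -1. Proof. by rewrite /sgn expr1 expr0 mul1r. Qed.
Lemma sgnFF : sgn k false * sgn k false = 1. Proof. by rewrite /sgn expr0 mulr1. Qed.
Definition sgnE := (sgnTT, sgnTF, sgnFT, sgnFF, sgnT, sgnF).

Lemma nz2 : (2 : k) = 0 -> False. Proof. by move=> h; move: h2; rewrite h eqxx. Qed.
Lemma nzN2 : (-2 : k) = 0 -> False. Proof. by move/eqP; rewrite oppr_eq0 (negbTE h2). Qed.

Ltac ncon h := move: h; rewrite ?sgnE => h;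
  match type of h with ?X = ?Y =>
    first [ exfalso; apply: nz1; transitivity (X - Y); [ring | by apply/eqP; rewrite subr_eq0; apply/eqP; exact: h]
          | exfalso; apply: nzN1; transitivity (X - Y); [ring | by apply/eqP; rewrite subr_eq0; apply/eqP; exact: h]
          | exfalso; apply: nz2; transitivity (X - Y); [ring | by apply/eqP; rewrite subr_eq0; apply/eqP; exact: h]
          | exfalso; apply: nzN2; transitivity (X - Y); [ring | by apply/eqP; rewrite subr_eq0; apply/eqP; exact: h] ]
  end.
Lemma piS_v01_v10_v00 : piS v01 v10 v00 = v00. Proof. by []. Qed.
Lemma piS_v01_v10_v10 : piS v01 v10 v10 = v01. Proof. by []. Qed.
Lemma piS_v01_v10_v01 : piS v01 v10 v01 = v10. Proof. by []. Qed.
Lemma piS_v01_v10_v11 : piS v01 v10 v11 = v11. Proof. by []. Qed.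
Lemma piS_v01_v11_v00 : piS v01 v11 v00 = v00. Proof. by []. Qed.
Lemma piS_v01_v11_v10 : piS v01 v11 v10 = v10. Proof. by []. Qed.
Lemma piS_v01_v11_v01 : piS v01 v11 v01 = v11. Proof. by []. Qed.
Lemma piS_v01_v11_v11 : piS v01 v11 v11 = v01. Proof. by []. Qed.
Lemma piS_v10_v11_v00 : piS v10 v11 v00 = v00. Proof. by []. Qed.
Lemma piS_v10_v11_v10 : piS v10 v11 v10 = v11. Proof. by []. Qed.
Lemma piS_v10_v11_v01 : piS v10 v11 v01 = v01. Proof. by []. Qed.
Lemma piS_v10_v11_v11 : piS v10 v11 v11 = v10. Proof. by []. Qed.
Definition piE := (piS_v01_v10_v00, piS_v01_v10_v10, piS_v01_v10_v01, piS_v01_v10_v11, piS_v01_v11_v00, piS_v01_v11_v10, piS_v01_v11_v01, piS_v01_v11_v11, piS_v10_v11_v00, piS_v10_v11_v10, piS_v10_v11_v01, piS_v10_v11_v11).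
Lemma chiL_v01_v00 : chiL k v01 v00 = 1. Proof. by []. Qed.
Lemma chiL_v01_v10 : chiL k v01 v10 = -1. Proof. by []. Qed.
Lemma chiL_v01_v01 : chiL k v01 v01 = 1. Proof. by []. Qed.
Lemma chiL_v01_v11 : chiL k v01 v11 = -1. Proof. by []. Qed.
Lemma chiL_v10_v00 : chiL k v10 v00 = 1. Proof. by []. Qed.
Lemma chiL_v10_v10 : chiL k v10 v10 = 1. Proof. by []. Qed.
Lemma chiL_v10_v01 : chiL k v10 v01 = -1. Proof. by []. Qed.
Lemma chiL_v10_v11 : chiL k v10 v11 = -1. Proof. by []. Qed.
Lemma chiL_v11_v00 : chiL k v11 v00 = 1. Proof. by []. Qed.
Lemma chiL_v11_v10 : chiL k v11 v10 = -1. Proof. by []. Qed.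
Lemma chiL_v11_v01 : chiL k v11 v01 = -1. Proof. by []. Qed.
Lemma chiL_v11_v11 : chiL k v11 v11 = 1. Proof. by []. Qed.
Definition chiE := (chiL_v01_v00, chiL_v01_v10, chiL_v01_v01, chiL_v01_v11, chiL_v10_v00, chiL_v10_v10, chiL_v10_v01, chiL_v10_v11, chiL_v11_v00, chiL_v11_v10, chiL_v11_v01, chiL_v11_v11).
Lemma chi1E v : chi1 k v = 1. Proof. by []. Qed.

Lemma forward (phi : A -> A) (theta : A) : extended_structure phi theta -> classification phi theta.
Proof.
case=> [[[hl hm hu hc hco] hinv] hfix hr].
have hu' : phi (d v00) = d v00 := hu.
have sqw : forall w, w != v00 -> exists s, [\/ phi (d w) = sc (sgn k s) (d v10), phi (d w) = sc (sgn k s) (d v01) | phi (d w) = sc (sgn k s) (d v11)].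
  move=> w hw; apply: sq_e => //.
  - by rewrite -hm gmul_dd addVV.
  - have -> : phi (d w) v00 = counit (phi (d w)) by rewrite counitE.
    rewrite hco counitE dE; move: hw; by case: (V_cases w) => ->.
have [s1 H1] := sqw v10 isT.
have [s2 H2] := sqw v01 isT.
have H3 : phi (d v11) = gmul (phi (d v10)) (phi (d v01)) by rewrite -hm gmul_dd add_v10_v01.
have lz := linZ hl.
case: H1 => H1.
{ case: H2 => H2.
{ rewrite H1 H2 gmul_scd addtab in H3.
case: s1 H1 H3 => H1 H3.
{ case: s2 H2 H3 => H2 H3.
{ have := hco (d v11); rewrite H3 !counitE !ffunE /= => h; ncon h. }
{ have := hco (d v11); rewrite H3 !counitE !ffunE /= => h; ncon h. } }
{ case: s2 H2 H3 => H2 H3.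
{ have := hco (d v11); rewrite H3 !counitE !ffunE /= => h; ncon h. }
{ have := hco (d v11); rewrite H3 !counitE !ffunE /= => h; ncon h. } } }
{ rewrite H1 H2 gmul_scd addtab in H3.
case: s1 H1 H3 => H1 H3.
{ case: s2 H2 H3 => H2 H3.
{ have Hlin : lin_on_basis phi i0 i1 i2 (- gg k i0) (- gg k i1) (gg k i2).
  split => //; rewrite ?ggE ?H1 ?H2 ?H3 ?sgnE ?sc1 ?scN1 //.
have [q0 q1 q2 q3] := Usq theta.
have e0 : U0 theta * U0 theta = 0%:R by rewrite -q0 -hr U0rhs hu' H1 H2 H3 ?sgnE ?UE; ring.
have e1 : U1 theta * U1 theta = 0%:R by rewrite -q1 -hr U1rhs hu' H1 H2 H3 ?sgnE ?UE; ring.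
have e2 : U2 theta * U2 theta = 0%:R by rewrite -q2 -hr U2rhs hu' H1 H2 H3 ?sgnE ?UE; ring.
have e3 : U3 theta * U3 theta = 0%:R by rewrite -q3 -hr U3rhs hu' H1 H2 H3 ?sgnE ?UE; ring.
have z0 := sq0 e0.
have z1 := sq0 e1.
have z2 := sq0 e2.
have z3 := sq0 e3.
right; exists i0, i1, i2; split; first by split. constructor 1; split; first exact: Hlin. apply: (U_inj h2); [rewrite z0|rewrite z1|rewrite z2|rewrite z3]; rewrite ?ggE ?UE ?sgnE; ring. }
{ have Hlin : lin_on_basis phi i0 i2 i1 (- gg k i0) (- gg k i2) (gg k i1).
  split => //; rewrite ?ggE ?H1 ?H2 ?H3 ?sgnE ?sc1 ?scN1 //.
have [q0 q1 q2 q3] := Usq theta.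
have e0 : U0 theta * U0 theta = 0%:R by rewrite -q0 -hr U0rhs hu' H1 H2 H3 ?sgnE ?UE; ring.
have e1 : U1 theta * U1 theta = 0%:R by rewrite -q1 -hr U1rhs hu' H1 H2 H3 ?sgnE ?UE; ring.
have e2 : U2 theta * U2 theta = 0%:R by rewrite -q2 -hr U2rhs hu' H1 H2 H3 ?sgnE ?UE; ring.
have e3 : U3 theta * U3 theta = 0%:R by rewrite -q3 -hr U3rhs hu' H1 H2 H3 ?sgnE ?UE; ring.
have z0 := sq0 e0.
have z1 := sq0 e1.
have z2 := sq0 e2.
have z3 := sq0 e3.
right; exists i0, i2, i1; split; first by split. constructor 1; split; first exact: Hlin. apply: (U_inj h2); [rewrite z0|rewrite z1|rewrite z2|rewrite z3]; rewrite ?ggE ?UE ?sgnE; ring. } }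
{ case: s2 H2 H3 => H2 H3.
{ have Hlin : lin_on_basis phi i1 i2 i0 (- gg k i1) (- gg k i2) (gg k i0).
  split => //; rewrite ?ggE ?H1 ?H2 ?H3 ?sgnE ?sc1 ?scN1 //.
have [q0 q1 q2 q3] := Usq theta.
have e0 : U0 theta * U0 theta = 0%:R by rewrite -q0 -hr U0rhs hu' H1 H2 H3 ?sgnE ?UE; ring.
have e1 : U1 theta * U1 theta = 0%:R by rewrite -q1 -hr U1rhs hu' H1 H2 H3 ?sgnE ?UE; ring.
have e2 : U2 theta * U2 theta = 0%:R by rewrite -q2 -hr U2rhs hu' H1 H2 H3 ?sgnE ?UE; ring.
have e3 : U3 theta * U3 theta = 0%:R by rewrite -q3 -hr U3rhs hu' H1 H2 H3 ?sgnE ?UE; ring.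
have z0 := sq0 e0.
have z1 := sq0 e1.
have z2 := sq0 e2.
have z3 := sq0 e3.
right; exists i1, i2, i0; split; first by split. constructor 1; split; first exact: Hlin. apply: (U_inj h2); [rewrite z0|rewrite z1|rewrite z2|rewrite z3]; rewrite ?ggE ?UE ?sgnE; ring. }
{ have Hid : forall a, phi a = a.
  move=> a; apply/ffunP => x; rewrite (lin_decomp hl) sumV hu' H1 H2 H3 ?sgnE !sc1; case: (V_cases x) => ->; rewrite !ffunE /=; ring.
have [q0 q1 q2 q3] := Usq theta.
have e0 : U0 theta * U0 theta = 4%:R by rewrite -q0 -hr U0rhs hu' H1 H2 H3 ?sgnE ?UE; ring.
have e1 : U1 theta * U1 theta = 4%:R by rewrite -q1 -hr U1rhs hu' H1 H2 H3 ?sgnE ?UE; ring.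
have e2 : U2 theta * U2 theta = 4%:R by rewrite -q2 -hr U2rhs hu' H1 H2 H3 ?sgnE ?UE; ring.
have e3 : U3 theta * U3 theta = 4%:R by rewrite -q3 -hr U3rhs hu' H1 H2 H3 ?sgnE ?UE; ring.
have [s0 z0] := sq4 e0.
have [s1 z1] := sq4 e1.
have [s2 z2] := sq4 e2.
have [s3 z3] := sq4 e3.
case: s0 z0 => z0.
{ case: s1 z1 => z1.
{ case: s2 z2 => z2.
{ case: s3 z3 => z3.
{ left; split; first exact: Hid. exists i0, i1, i2; split; first by split. exists true, false; constructor 1; apply: (U_inj h2); [rewrite z0|rewrite z1|rewrite z2|rewrite z3]; rewrite ?ggE ?UE ?sgnE; ring. }
{ left; split; first exact: Hid. exists i0, i1, i2; split; first by split. exists true, true; constructor 4; apply: (U_inj h2); [rewrite z0|rewrite z1|rewrite z2|rewrite z3]; rewrite ?ggE ?UE ?sgnE; ring. } }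
{ case: s3 z3 => z3.
{ left; split; first exact: Hid. exists i0, i1, i2; split; first by split. exists true, false; constructor 3; apply: (U_inj h2); [rewrite z0|rewrite z1|rewrite z2|rewrite z3]; rewrite ?ggE ?UE ?sgnE; ring. }
{ left; split; first exact: Hid. exists i1, i0, i2; split; first by split. exists true, false; constructor 2; apply: (U_inj h2); [rewrite z0|rewrite z1|rewrite z2|rewrite z3]; rewrite ?ggE ?UE ?sgnE; ring. } } }
{ case: s2 z2 => z2.
{ case: s3 z3 => z3.
{ left; split; first exact: Hid. exists i0, i1, i2; split; first by split. exists true, true; constructor 3; apply: (U_inj h2); [rewrite z0|rewrite z1|rewrite z2|rewrite z3]; rewrite ?ggE ?UE ?sgnE; ring. }
{ left; split; first exact: Hid. exists i0, i1, i2; split; first by split. exists true, false; constructor 2; apply: (U_inj h2); [rewrite z0|rewrite z1|rewrite z2|rewrite z3]; rewrite ?ggE ?UE ?sgnE; ring. } }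
{ case: s3 z3 => z3.
{ left; split; first exact: Hid. exists i2, i0, i1; split; first by split. exists true, false; constructor 2; apply: (U_inj h2); [rewrite z0|rewrite z1|rewrite z2|rewrite z3]; rewrite ?ggE ?UE ?sgnE; ring. }
{ left; split; first exact: Hid. exists i0, i1, i2; split; first by split. exists false, true; constructor 4; apply: (U_inj h2); [rewrite z0|rewrite z1|rewrite z2|rewrite z3]; rewrite ?ggE ?UE ?sgnE; ring. } } } }
{ case: s1 z1 => z1.
{ case: s2 z2 => z2.
{ case: s3 z3 => z3.
{ left; split; first exact: Hid. exists i0, i1, i2; split; first by split. exists true, false; constructor 4; apply: (U_inj h2); [rewrite z0|rewrite z1|rewrite z2|rewrite z3]; rewrite ?ggE ?UE ?sgnE; ring. }
{ left; split; first exact: Hid. exists i2, i0, i1; split; first by split. exists false, false; constructor 2; apply: (U_inj h2); [rewrite z0|rewrite z1|rewrite z2|rewrite z3]; rewrite ?ggE ?UE ?sgnE; ring. } }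
{ case: s3 z3 => z3.
{ left; split; first exact: Hid. exists i0, i1, i2; split; first by split. exists false, false; constructor 2; apply: (U_inj h2); [rewrite z0|rewrite z1|rewrite z2|rewrite z3]; rewrite ?ggE ?UE ?sgnE; ring. }
{ left; split; first exact: Hid. exists i0, i1, i2; split; first by split. exists false, false; constructor 3; apply: (U_inj h2); [rewrite z0|rewrite z1|rewrite z2|rewrite z3]; rewrite ?ggE ?UE ?sgnE; ring. } } }
{ case: s2 z2 => z2.
{ case: s3 z3 => z3.
{ left; split; first exact: Hid. exists i1, i0, i2; split; first by split. exists false, false; constructor 2; apply: (U_inj h2); [rewrite z0|rewrite z1|rewrite z2|rewrite z3]; rewrite ?ggE ?UE ?sgnE; ring. }
{ left; split; first exact: Hid. exists i0, i1, i2; split; first by split. exists false, true; constructor 3; apply: (U_inj h2); [rewrite z0|rewrite z1|rewrite z2|rewrite z3]; rewrite ?ggE ?UE ?sgnE; ring. } }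
{ case: s3 z3 => z3.
{ left; split; first exact: Hid. exists i0, i1, i2; split; first by split. exists false, false; constructor 4; apply: (U_inj h2); [rewrite z0|rewrite z1|rewrite z2|rewrite z3]; rewrite ?ggE ?UE ?sgnE; ring. }
{ left; split; first exact: Hid. exists i0, i1, i2; split; first by split. exists false, false; constructor 1; apply: (U_inj h2); [rewrite z0|rewrite z1|rewrite z2|rewrite z3]; rewrite ?ggE ?UE ?sgnE; ring. } } } } } } }
{ rewrite H1 H2 gmul_scd addtab in H3.
case: s1 H1 H3 => H1 H3.
{ case: s2 H2 H3 => H2 H3.
{ have := ptE v01 (hinv (d v01)); rewrite H2 lz H3 !ffunE /= => h; ncon h. }
{ have := ptE v01 (hinv (d v01)); rewrite H2 lz H3 !ffunE /= => h; ncon h. } }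
{ case: s2 H2 H3 => H2 H3.
{ have Hlin : lin_on_basis phi i1 i2 i0 (- gg k i2) (- gg k i1) (gg k i0).
  split => //; rewrite ?ggE ?H1 ?H2 ?H3 ?sgnE ?sc1 ?scN1 //.
have [q0 q1 q2 q3] := Usq theta.
have e0 : U0 theta * U0 theta = 0%:R by rewrite -q0 -hr U0rhs hu' H1 H2 H3 ?sgnE ?UE; ring.
have e1 : U1 theta * U1 theta = 4%:R by rewrite -q1 -hr U1rhs hu' H1 H2 H3 ?sgnE ?UE; ring.
have e2 : U2 theta * U2 theta = 0%:R by rewrite -q2 -hr U2rhs hu' H1 H2 H3 ?sgnE ?UE; ring.
have e3 : U3 theta * U3 theta = 4%:R by rewrite -q3 -hr U3rhs hu' H1 H2 H3 ?sgnE ?UE; ring.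
have z0 := sq0 e0.
have [s1 z1] := sq4 e1.
have z2 := sq0 e2.
have [s3 z3] := sq4 e3.
case: s1 z1 => z1.
{ case: s3 z3 => z3.
{ right; exists i1, i2, i0; split; first by split. constructor 3; split; first exact: Hlin. exists true; left. apply: (U_inj h2); [rewrite z0|rewrite z1|rewrite z2|rewrite z3]; rewrite ?ggE ?UE ?sgnE; ring. }
{ right; exists i1, i2, i0; split; first by split. constructor 3; split; first exact: Hlin. exists true; right. apply: (U_inj h2); [rewrite z0|rewrite z1|rewrite z2|rewrite z3]; rewrite ?ggE ?UE ?sgnE; ring. } }
{ case: s3 z3 => z3.
{ right; exists i1, i2, i0; split; first by split. constructor 3; split; first exact: Hlin. exists false; right. apply: (U_inj h2); [rewrite z0|rewrite z1|rewrite z2|rewrite z3]; rewrite ?ggE ?UE ?sgnE; ring. }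
{ right; exists i1, i2, i0; split; first by split. constructor 3; split; first exact: Hlin. exists false; left. apply: (U_inj h2); [rewrite z0|rewrite z1|rewrite z2|rewrite z3]; rewrite ?ggE ?UE ?sgnE; ring. } } }
{ have Hlin : lin_on_basis phi i1 i2 i0 (gg k i2) (gg k i1) (gg k i0).
  split => //; rewrite ?ggE ?H1 ?H2 ?H3 ?sgnE ?sc1 ?scN1 //.
have [q0 q1 q2 q3] := Usq theta.
have e0 : U0 theta * U0 theta = 4%:R by rewrite -q0 -hr U0rhs hu' H1 H2 H3 ?sgnE ?UE; ring.
have e1 : U1 theta * U1 theta = 0%:R by rewrite -q1 -hr U1rhs hu' H1 H2 H3 ?sgnE ?UE; ring.
have e2 : U2 theta * U2 theta = 4%:R by rewrite -q2 -hr U2rhs hu' H1 H2 H3 ?sgnE ?UE; ring.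
have e3 : U3 theta * U3 theta = 0%:R by rewrite -q3 -hr U3rhs hu' H1 H2 H3 ?sgnE ?UE; ring.
have [s0 z0] := sq4 e0.
have z1 := sq0 e1.
have [s2 z2] := sq4 e2.
have z3 := sq0 e3.
case: s0 z0 => z0.
{ case: s2 z2 => z2.
{ right; exists i1, i2, i0; split; first by split. constructor 2; split; first exact: Hlin. exists true; left. apply: (U_inj h2); [rewrite z0|rewrite z1|rewrite z2|rewrite z3]; rewrite ?ggE ?UE ?sgnE; ring. }
{ right; exists i1, i2, i0; split; first by split. constructor 2; split; first exact: Hlin. exists true; right. apply: (U_inj h2); [rewrite z0|rewrite z1|rewrite z2|rewrite z3]; rewrite ?ggE ?UE ?sgnE; ring. } }
{ case: s2 z2 => z2.
{ right; exists i1, i2, i0; split; first by split. constructor 2; split; first exact: Hlin. exists false; right. apply: (U_inj h2); [rewrite z0|rewrite z1|rewrite z2|rewrite z3]; rewrite ?ggE ?UE ?sgnE; ring. }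
{ right; exists i1, i2, i0; split; first by split. constructor 2; split; first exact: Hlin. exists false; left. apply: (U_inj h2); [rewrite z0|rewrite z1|rewrite z2|rewrite z3]; rewrite ?ggE ?UE ?sgnE; ring. } } } } } }
{ case: H2 => H2.
{ rewrite H1 H2 gmul_scd addtab in H3.
case: s1 H1 H3 => H1 H3.
{ case: s2 H2 H3 => H2 H3.
{ have Hlin : lin_on_basis phi i0 i1 i2 (- gg k i1) (- gg k i0) (gg k i2).
  split => //; rewrite ?ggE ?H1 ?H2 ?H3 ?sgnE ?sc1 ?scN1 //.
have [q0 q1 q2 q3] := Usq theta.
have e0 : U0 theta * U0 theta = 0%:R by rewrite -q0 -hr U0rhs hu' H1 H2 H3 ?sgnE ?UE; ring.
have e1 : U1 theta * U1 theta = 4%:R by rewrite -q1 -hr U1rhs hu' H1 H2 H3 ?sgnE ?UE; ring.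
have e2 : U2 theta * U2 theta = 4%:R by rewrite -q2 -hr U2rhs hu' H1 H2 H3 ?sgnE ?UE; ring.
have e3 : U3 theta * U3 theta = 0%:R by rewrite -q3 -hr U3rhs hu' H1 H2 H3 ?sgnE ?UE; ring.
have z0 := sq0 e0.
have [s1 z1] := sq4 e1.
have [s2 z2] := sq4 e2.
have z3 := sq0 e3.
case: s1 z1 => z1.
{ case: s2 z2 => z2.
{ right; exists i0, i1, i2; split; first by split. constructor 3; split; first exact: Hlin. exists true; left. apply: (U_inj h2); [rewrite z0|rewrite z1|rewrite z2|rewrite z3]; rewrite ?ggE ?UE ?sgnE; ring. }
{ right; exists i0, i1, i2; split; first by split. constructor 3; split; first exact: Hlin. exists false; right. apply: (U_inj h2); [rewrite z0|rewrite z1|rewrite z2|rewrite z3]; rewrite ?ggE ?UE ?sgnE; ring. } }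
{ case: s2 z2 => z2.
{ right; exists i0, i1, i2; split; first by split. constructor 3; split; first exact: Hlin. exists true; right. apply: (U_inj h2); [rewrite z0|rewrite z1|rewrite z2|rewrite z3]; rewrite ?ggE ?UE ?sgnE; ring. }
{ right; exists i0, i1, i2; split; first by split. constructor 3; split; first exact: Hlin. exists false; left. apply: (U_inj h2); [rewrite z0|rewrite z1|rewrite z2|rewrite z3]; rewrite ?ggE ?UE ?sgnE; ring. } } }
{ have := ptE v10 (hinv (d v10)); rewrite H1 lz H2 !ffunE /= => h; ncon h. } }
{ case: s2 H2 H3 => H2 H3.
{ have := ptE v10 (hinv (d v10)); rewrite H1 lz H2 !ffunE /= => h; ncon h. }
{ have Hlin : lin_on_basis phi i0 i1 i2 (gg k i1) (gg k i0) (gg k i2).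
  split => //; rewrite ?ggE ?H1 ?H2 ?H3 ?sgnE ?sc1 ?scN1 //.
have [q0 q1 q2 q3] := Usq theta.
have e0 : U0 theta * U0 theta = 4%:R by rewrite -q0 -hr U0rhs hu' H1 H2 H3 ?sgnE ?UE; ring.
have e1 : U1 theta * U1 theta = 0%:R by rewrite -q1 -hr U1rhs hu' H1 H2 H3 ?sgnE ?UE; ring.
have e2 : U2 theta * U2 theta = 0%:R by rewrite -q2 -hr U2rhs hu' H1 H2 H3 ?sgnE ?UE; ring.
have e3 : U3 theta * U3 theta = 4%:R by rewrite -q3 -hr U3rhs hu' H1 H2 H3 ?sgnE ?UE; ring.
have [s0 z0] := sq4 e0.
have z1 := sq0 e1.
have z2 := sq0 e2.
have [s3 z3] := sq4 e3.
case: s0 z0 => z0.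
{ case: s3 z3 => z3.
{ right; exists i0, i1, i2; split; first by split. constructor 2; split; first exact: Hlin. exists true; left. apply: (U_inj h2); [rewrite z0|rewrite z1|rewrite z2|rewrite z3]; rewrite ?ggE ?UE ?sgnE; ring. }
{ right; exists i0, i1, i2; split; first by split. constructor 2; split; first exact: Hlin. exists true; right. apply: (U_inj h2); [rewrite z0|rewrite z1|rewrite z2|rewrite z3]; rewrite ?ggE ?UE ?sgnE; ring. } }
{ case: s3 z3 => z3.
{ right; exists i0, i1, i2; split; first by split. constructor 2; split; first exact: Hlin. exists false; right. apply: (U_inj h2); [rewrite z0|rewrite z1|rewrite z2|rewrite z3]; rewrite ?ggE ?UE ?sgnE; ring. }
{ right; exists i0, i1, i2; split; first by split. constructor 2; split; first exact: Hlin. exists false; left. apply: (U_inj h2); [rewrite z0|rewrite z1|rewrite z2|rewrite z3]; rewrite ?ggE ?UE ?sgnE; ring. } } } } }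
{ rewrite H1 H2 gmul_scd addtab in H3.
case: s1 H1 H3 => H1 H3.
{ case: s2 H2 H3 => H2 H3.
{ have := hco (d v11); rewrite H3 !counitE !ffunE /= => h; ncon h. }
{ have := hco (d v11); rewrite H3 !counitE !ffunE /= => h; ncon h. } }
{ case: s2 H2 H3 => H2 H3.
{ have := hco (d v11); rewrite H3 !counitE !ffunE /= => h; ncon h. }
{ have := hco (d v11); rewrite H3 !counitE !ffunE /= => h; ncon h. } } }
{ rewrite H1 H2 gmul_scd addtab in H3.
case: s1 H1 H3 => H1 H3.
{ case: s2 H2 H3 => H2 H3.
{ have := ptE v10 (hinv (d v10)); rewrite H1 lz H2 !ffunE /= => h; ncon h. }
{ have := ptE v10 (hinv (d v10)); rewrite H1 lz H2 !ffunE /= => h; ncon h. } }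
{ case: s2 H2 H3 => H2 H3.
{ have := ptE v10 (hinv (d v10)); rewrite H1 lz H2 !ffunE /= => h; ncon h. }
{ have := ptE v10 (hinv (d v10)); rewrite H1 lz H2 !ffunE /= => h; ncon h. } } } }
{ case: H2 => H2.
{ rewrite H1 H2 gmul_scd addtab in H3.
case: s1 H1 H3 => H1 H3.
{ case: s2 H2 H3 => H2 H3.
{ have := ptE v10 (hinv (d v10)); rewrite H1 lz H3 !ffunE /= => h; ncon h. }
{ have := ptE v10 (hinv (d v10)); rewrite H1 lz H3 !ffunE /= => h; ncon h. } }
{ case: s2 H2 H3 => H2 H3.
{ have := ptE v10 (hinv (d v10)); rewrite H1 lz H3 !ffunE /= => h; ncon h. }
{ have := ptE v10 (hinv (d v10)); rewrite H1 lz H3 !ffunE /= => h; ncon h. } } }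
{ rewrite H1 H2 gmul_scd addtab in H3.
case: s1 H1 H3 => H1 H3.
{ case: s2 H2 H3 => H2 H3.
{ have := ptE v10 (hinv (d v10)); rewrite H1 lz H3 !ffunE /= => h; ncon h. }
{ have Hlin : lin_on_basis phi i0 i2 i1 (- gg k i2) (- gg k i0) (gg k i1).
  split => //; rewrite ?ggE ?H1 ?H2 ?H3 ?sgnE ?sc1 ?scN1 //.
have [q0 q1 q2 q3] := Usq theta.
have e0 : U0 theta * U0 theta = 0%:R by rewrite -q0 -hr U0rhs hu' H1 H2 H3 ?sgnE ?UE; ring.
have e1 : U1 theta * U1 theta = 0%:R by rewrite -q1 -hr U1rhs hu' H1 H2 H3 ?sgnE ?UE; ring.
have e2 : U2 theta * U2 theta = 4%:R by rewrite -q2 -hr U2rhs hu' H1 H2 H3 ?sgnE ?UE; ring.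
have e3 : U3 theta * U3 theta = 4%:R by rewrite -q3 -hr U3rhs hu' H1 H2 H3 ?sgnE ?UE; ring.
have z0 := sq0 e0.
have z1 := sq0 e1.
have [s2 z2] := sq4 e2.
have [s3 z3] := sq4 e3.
case: s2 z2 => z2.
{ case: s3 z3 => z3.
{ right; exists i0, i2, i1; split; first by split. constructor 3; split; first exact: Hlin. exists true; left. apply: (U_inj h2); [rewrite z0|rewrite z1|rewrite z2|rewrite z3]; rewrite ?ggE ?UE ?sgnE; ring. }
{ right; exists i0, i2, i1; split; first by split. constructor 3; split; first exact: Hlin. exists true; right. apply: (U_inj h2); [rewrite z0|rewrite z1|rewrite z2|rewrite z3]; rewrite ?ggE ?UE ?sgnE; ring. } }
{ case: s3 z3 => z3.
{ right; exists i0, i2, i1; split; first by split. constructor 3; split; first exact: Hlin. exists false; right. apply: (U_inj h2); [rewrite z0|rewrite z1|rewrite z2|rewrite z3]; rewrite ?ggE ?UE ?sgnE; ring. }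
{ right; exists i0, i2, i1; split; first by split. constructor 3; split; first exact: Hlin. exists false; left. apply: (U_inj h2); [rewrite z0|rewrite z1|rewrite z2|rewrite z3]; rewrite ?ggE ?UE ?sgnE; ring. } } } }
{ case: s2 H2 H3 => H2 H3.
{ have := ptE v10 (hinv (d v10)); rewrite H1 lz H3 !ffunE /= => h; ncon h. }
{ have Hlin : lin_on_basis phi i0 i2 i1 (gg k i2) (gg k i0) (gg k i1).
  split => //; rewrite ?ggE ?H1 ?H2 ?H3 ?sgnE ?sc1 ?scN1 //.
have [q0 q1 q2 q3] := Usq theta.
have e0 : U0 theta * U0 theta = 4%:R by rewrite -q0 -hr U0rhs hu' H1 H2 H3 ?sgnE ?UE; ring.
have e1 : U1 theta * U1 theta = 4%:R by rewrite -q1 -hr U1rhs hu' H1 H2 H3 ?sgnE ?UE; ring.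
have e2 : U2 theta * U2 theta = 0%:R by rewrite -q2 -hr U2rhs hu' H1 H2 H3 ?sgnE ?UE; ring.
have e3 : U3 theta * U3 theta = 0%:R by rewrite -q3 -hr U3rhs hu' H1 H2 H3 ?sgnE ?UE; ring.
have [s0 z0] := sq4 e0.
have [s1 z1] := sq4 e1.
have z2 := sq0 e2.
have z3 := sq0 e3.
case: s0 z0 => z0.
{ case: s1 z1 => z1.
{ right; exists i0, i2, i1; split; first by split. constructor 2; split; first exact: Hlin. exists true; left. apply: (U_inj h2); [rewrite z0|rewrite z1|rewrite z2|rewrite z3]; rewrite ?ggE ?UE ?sgnE; ring. }
{ right; exists i0, i2, i1; split; first by split. constructor 2; split; first exact: Hlin. exists true; right. apply: (U_inj h2); [rewrite z0|rewrite z1|rewrite z2|rewrite z3]; rewrite ?ggE ?UE ?sgnE; ring. } }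
{ case: s1 z1 => z1.
{ right; exists i0, i2, i1; split; first by split. constructor 2; split; first exact: Hlin. exists false; right. apply: (U_inj h2); [rewrite z0|rewrite z1|rewrite z2|rewrite z3]; rewrite ?ggE ?UE ?sgnE; ring. }
{ right; exists i0, i2, i1; split; first by split. constructor 2; split; first exact: Hlin. exists false; left. apply: (U_inj h2); [rewrite z0|rewrite z1|rewrite z2|rewrite z3]; rewrite ?ggE ?UE ?sgnE; ring. } } } } }
{ rewrite H1 H2 gmul_scd addtab in H3.
case: s1 H1 H3 => H1 H3.
{ case: s2 H2 H3 => H2 H3.
{ have := hco (d v11); rewrite H3 !counitE !ffunE /= => h; ncon h. }
{ have := hco (d v11); rewrite H3 !counitE !ffunE /= => h; ncon h. } }
{ case: s2 H2 H3 => H2 H3.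
{ have := hco (d v11); rewrite H3 !counitE !ffunE /= => h; ncon h. }
{ have := hco (d v11); rewrite H3 !counitE !ffunE /= => h; ncon h. } } } }
Qed.

Lemma bw_b_i0i1i2 (phi : A -> A) (theta : A) : lin_on_basis phi i0 i1 i2 (- gg k i0) (- gg k i1) (gg k i2) -> theta = 0 -> extended_structure phi theta.
Proof.
case=> hl he hi hj hk hth.
case: (@id_hyps k) => p1 p2 _ _ _; case: (@chiL_hyps_v11 k) => p3 p4 p5.
have hfd : forall v, phi (d v) = sc (chiL k v11 v) (d (id v)).
  move=> v; case: (V_cases v) => ->; rewrite ?piE ?chiE ?chi1E ?sc1 ?scN1; [exact: he | exact: hi | exact: hj | exact: hk].
have [hf hinvo] := psi_frob p1 p2 p3 p4 p5 hl hfd.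
have uph0 : forall c, U0 (phi c) = U3 c.
  move=> c; rewrite (U0lin hl) !hfd ?piE ?chiE ?chi1E ?UE /U3; ring.
have uph1 : forall c, U1 (phi c) = U2 c.
  move=> c; rewrite (U1lin hl) !hfd ?piE ?chiE ?chi1E ?UE /U2; ring.
have uph2 : forall c, U2 (phi c) = U1 c.
  move=> c; rewrite (U2lin hl) !hfd ?piE ?chiE ?chi1E ?UE /U1; ring.
have uph3 : forall c, U3 (phi c) = U0 c.
  move=> c; rewrite (U3lin hl) !hfd ?piE ?chiE ?chi1E ?UE /U0; ring.
subst theta.
all: split; [by split | move=> a; apply: (U_inj h2); [rewrite uph0 | rewrite uph1 | rewrite uph2 | rewrite uph3]; rewrite ?U0M ?U1M ?U2M ?U3M ?ggE ?UE ?sgnE; ring | ].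
all: apply: (U_inj h2); rewrite ?U0rhs ?U1rhs ?U2rhs ?U3rhs !hfd ?piE ?chiE ?chi1E ?U0M ?U1M ?U2M ?U3M ?ggE ?UE ?sgnE; ring.
Qed.

Lemma bw_c_i0i1i2 (phi : A -> A) (theta : A) : lin_on_basis phi i0 i1 i2 (gg k i1) (gg k i0) (gg k i2) -> (exists s : bool, theta = sc (sgn k s) (e k + gg k i2) \/ theta = sc (sgn k s) (gg k i0 + gg k i1)) -> extended_structure phi theta.
Proof.
case=> hl he hi hj hk hth.
case: (@swap_hyps_v01_v10 k) => p1 p2 _ p5; case: (@id_hyps k) => _ _ p3 p4 _.
have hfd : forall v, phi (d v) = sc (chi1 k v) (d (piS v01 v10 v)).
  move=> v; case: (V_cases v) => ->; rewrite ?piE ?chiE ?chi1E ?sc1 ?scN1; [exact: he | exact: hi | exact: hj | exact: hk].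
have [hf hinvo] := psi_frob p1 p2 p3 p4 p5 hl hfd.
have uph0 : forall c, U0 (phi c) = U0 c.
  move=> c; rewrite (U0lin hl) !hfd ?piE ?chiE ?chi1E ?UE /U0; ring.
have uph1 : forall c, U1 (phi c) = U2 c.
  move=> c; rewrite (U1lin hl) !hfd ?piE ?chiE ?chi1E ?UE /U2; ring.
have uph2 : forall c, U2 (phi c) = U1 c.
  move=> c; rewrite (U2lin hl) !hfd ?piE ?chiE ?chi1E ?UE /U1; ring.
have uph3 : forall c, U3 (phi c) = U3 c.
  move=> c; rewrite (U3lin hl) !hfd ?piE ?chiE ?chi1E ?UE /U3; ring.
case: hth => s [->|->]; case: s.
all: split; [by split | move=> a; apply: (U_inj h2); [rewrite uph0 | rewrite uph1 | rewrite uph2 | rewrite uph3]; rewrite ?U0M ?U1M ?U2M ?U3M ?ggE ?UE ?sgnE; ring | ].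
all: apply: (U_inj h2); rewrite ?U0rhs ?U1rhs ?U2rhs ?U3rhs !hfd ?piE ?chiE ?chi1E ?U0M ?U1M ?U2M ?U3M ?ggE ?UE ?sgnE; ring.
Qed.

Lemma bw_d_i0i1i2 (phi : A -> A) (theta : A) : lin_on_basis phi i0 i1 i2 (- gg k i1) (- gg k i0) (gg k i2) -> (exists s : bool, theta = sc (sgn k s) (e k - gg k i2) \/ theta = sc (sgn k s) (gg k i0 - gg k i1)) -> extended_structure phi theta.
Proof.
case=> hl he hi hj hk hth.
case: (@swap_hyps_v01_v10 k) => p1 p2 p5 _; case: (@chiL_hyps_v11 k) => p3 p4 _.
have hfd : forall v, phi (d v) = sc (chiL k v11 v) (d (piS v01 v10 v)).
  move=> v; case: (V_cases v) => ->; rewrite ?piE ?chiE ?chi1E ?sc1 ?scN1; [exact: he | exact: hi | exact: hj | exact: hk].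
have [hf hinvo] := psi_frob p1 p2 p3 p4 p5 hl hfd.
have uph0 : forall c, U0 (phi c) = U3 c.
  move=> c; rewrite (U0lin hl) !hfd ?piE ?chiE ?chi1E ?UE /U3; ring.
have uph1 : forall c, U1 (phi c) = U1 c.
  move=> c; rewrite (U1lin hl) !hfd ?piE ?chiE ?chi1E ?UE /U1; ring.
have uph2 : forall c, U2 (phi c) = U2 c.
  move=> c; rewrite (U2lin hl) !hfd ?piE ?chiE ?chi1E ?UE /U2; ring.
have uph3 : forall c, U3 (phi c) = U0 c.
  move=> c; rewrite (U3lin hl) !hfd ?piE ?chiE ?chi1E ?UE /U0; ring.
case: hth => s [->|->]; case: s.
all: split; [by split | move=> a; apply: (U_inj h2); [rewrite uph0 | rewrite uph1 | rewrite uph2 | rewrite uph3]; rewrite ?U0M ?U1M ?U2M ?U3M ?ggE ?UE ?sgnE; ring | ].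
all: apply: (U_inj h2); rewrite ?U0rhs ?U1rhs ?U2rhs ?U3rhs !hfd ?piE ?chiE ?chi1E ?U0M ?U1M ?U2M ?U3M ?ggE ?UE ?sgnE; ring.
Qed.

Lemma bw_b_i0i2i1 (phi : A -> A) (theta : A) : lin_on_basis phi i0 i2 i1 (- gg k i0) (- gg k i2) (gg k i1) -> theta = 0 -> extended_structure phi theta.
Proof.
case=> hl he hi hj hk hth.
case: (@id_hyps k) => p1 p2 _ _ _; case: (@chiL_hyps_v01 k) => p3 p4 p5.
have hfd : forall v, phi (d v) = sc (chiL k v01 v) (d (id v)).
  move=> v; case: (V_cases v) => ->; rewrite ?piE ?chiE ?chi1E ?sc1 ?scN1; [exact: he | exact: hi | exact: hk | exact: hj].
have [hf hinvo] := psi_frob p1 p2 p3 p4 p5 hl hfd.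
have uph0 : forall c, U0 (phi c) = U1 c.
  move=> c; rewrite (U0lin hl) !hfd ?piE ?chiE ?chi1E ?UE /U1; ring.
have uph1 : forall c, U1 (phi c) = U0 c.
  move=> c; rewrite (U1lin hl) !hfd ?piE ?chiE ?chi1E ?UE /U0; ring.
have uph2 : forall c, U2 (phi c) = U3 c.
  move=> c; rewrite (U2lin hl) !hfd ?piE ?chiE ?chi1E ?UE /U3; ring.
have uph3 : forall c, U3 (phi c) = U2 c.
  move=> c; rewrite (U3lin hl) !hfd ?piE ?chiE ?chi1E ?UE /U2; ring.
subst theta.
all: split; [by split | move=> a; apply: (U_inj h2); [rewrite uph0 | rewrite uph1 | rewrite uph2 | rewrite uph3]; rewrite ?U0M ?U1M ?U2M ?U3M ?ggE ?UE ?sgnE; ring | ].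
all: apply: (U_inj h2); rewrite ?U0rhs ?U1rhs ?U2rhs ?U3rhs !hfd ?piE ?chiE ?chi1E ?U0M ?U1M ?U2M ?U3M ?ggE ?UE ?sgnE; ring.
Qed.

Lemma bw_c_i0i2i1 (phi : A -> A) (theta : A) : lin_on_basis phi i0 i2 i1 (gg k i2) (gg k i0) (gg k i1) -> (exists s : bool, theta = sc (sgn k s) (e k + gg k i1) \/ theta = sc (sgn k s) (gg k i0 + gg k i2)) -> extended_structure phi theta.
Proof.
case=> hl he hi hj hk hth.
case: (@swap_hyps_v10_v11 k) => p1 p2 _ p5; case: (@id_hyps k) => _ _ p3 p4 _.
have hfd : forall v, phi (d v) = sc (chi1 k v) (d (piS v10 v11 v)).
  move=> v; case: (V_cases v) => ->; rewrite ?piE ?chiE ?chi1E ?sc1 ?scN1; [exact: he | exact: hi | exact: hk | exact: hj].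
have [hf hinvo] := psi_frob p1 p2 p3 p4 p5 hl hfd.
have uph0 : forall c, U0 (phi c) = U0 c.
  move=> c; rewrite (U0lin hl) !hfd ?piE ?chiE ?chi1E ?UE /U0; ring.
have uph1 : forall c, U1 (phi c) = U1 c.
  move=> c; rewrite (U1lin hl) !hfd ?piE ?chiE ?chi1E ?UE /U1; ring.
have uph2 : forall c, U2 (phi c) = U3 c.
  move=> c; rewrite (U2lin hl) !hfd ?piE ?chiE ?chi1E ?UE /U3; ring.
have uph3 : forall c, U3 (phi c) = U2 c.
  move=> c; rewrite (U3lin hl) !hfd ?piE ?chiE ?chi1E ?UE /U2; ring.
case: hth => s [->|->]; case: s.
all: split; [by split | move=> a; apply: (U_inj h2); [rewrite uph0 | rewrite uph1 | rewrite uph2 | rewrite uph3]; rewrite ?U0M ?U1M ?U2M ?U3M ?ggE ?UE ?sgnE; ring | ].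
all: apply: (U_inj h2); rewrite ?U0rhs ?U1rhs ?U2rhs ?U3rhs !hfd ?piE ?chiE ?chi1E ?U0M ?U1M ?U2M ?U3M ?ggE ?UE ?sgnE; ring.
Qed.

Lemma bw_d_i0i2i1 (phi : A -> A) (theta : A) : lin_on_basis phi i0 i2 i1 (- gg k i2) (- gg k i0) (gg k i1) -> (exists s : bool, theta = sc (sgn k s) (e k - gg k i1) \/ theta = sc (sgn k s) (gg k i0 - gg k i2)) -> extended_structure phi theta.
Proof.
case=> hl he hi hj hk hth.
case: (@swap_hyps_v10_v11 k) => p1 p2 p5 _; case: (@chiL_hyps_v01 k) => p3 p4 _.
have hfd : forall v, phi (d v) = sc (chiL k v01 v) (d (piS v10 v11 v)).
  move=> v; case: (V_cases v) => ->; rewrite ?piE ?chiE ?chi1E ?sc1 ?scN1; [exact: he | exact: hi | exact: hk | exact: hj].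
have [hf hinvo] := psi_frob p1 p2 p3 p4 p5 hl hfd.
have uph0 : forall c, U0 (phi c) = U1 c.
  move=> c; rewrite (U0lin hl) !hfd ?piE ?chiE ?chi1E ?UE /U1; ring.
have uph1 : forall c, U1 (phi c) = U0 c.
  move=> c; rewrite (U1lin hl) !hfd ?piE ?chiE ?chi1E ?UE /U0; ring.
have uph2 : forall c, U2 (phi c) = U2 c.
  move=> c; rewrite (U2lin hl) !hfd ?piE ?chiE ?chi1E ?UE /U2; ring.
have uph3 : forall c, U3 (phi c) = U3 c.
  move=> c; rewrite (U3lin hl) !hfd ?piE ?chiE ?chi1E ?UE /U3; ring.
case: hth => s [->|->]; case: s.
all: split; [by split | move=> a; apply: (U_inj h2); [rewrite uph0 | rewrite uph1 | rewrite uph2 | rewrite uph3]; rewrite ?U0M ?U1M ?U2M ?U3M ?ggE ?UE ?sgnE; ring | ].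
all: apply: (U_inj h2); rewrite ?U0rhs ?U1rhs ?U2rhs ?U3rhs !hfd ?piE ?chiE ?chi1E ?U0M ?U1M ?U2M ?U3M ?ggE ?UE ?sgnE; ring.
Qed.

Lemma bw_b_i1i0i2 (phi : A -> A) (theta : A) : lin_on_basis phi i1 i0 i2 (- gg k i1) (- gg k i0) (gg k i2) -> theta = 0 -> extended_structure phi theta.
Proof.
case=> hl he hi hj hk hth.
case: (@id_hyps k) => p1 p2 _ _ _; case: (@chiL_hyps_v11 k) => p3 p4 p5.
have hfd : forall v, phi (d v) = sc (chiL k v11 v) (d (id v)).
  move=> v; case: (V_cases v) => ->; rewrite ?piE ?chiE ?chi1E ?sc1 ?scN1; [exact: he | exact: hj | exact: hi | exact: hk].
have [hf hinvo] := psi_frob p1 p2 p3 p4 p5 hl hfd.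
have uph0 : forall c, U0 (phi c) = U3 c.
  move=> c; rewrite (U0lin hl) !hfd ?piE ?chiE ?chi1E ?UE /U3; ring.
have uph1 : forall c, U1 (phi c) = U2 c.
  move=> c; rewrite (U1lin hl) !hfd ?piE ?chiE ?chi1E ?UE /U2; ring.
have uph2 : forall c, U2 (phi c) = U1 c.
  move=> c; rewrite (U2lin hl) !hfd ?piE ?chiE ?chi1E ?UE /U1; ring.
have uph3 : forall c, U3 (phi c) = U0 c.
  move=> c; rewrite (U3lin hl) !hfd ?piE ?chiE ?chi1E ?UE /U0; ring.
subst theta.
all: split; [by split | move=> a; apply: (U_inj h2); [rewrite uph0 | rewrite uph1 | rewrite uph2 | rewrite uph3]; rewrite ?U0M ?U1M ?U2M ?U3M ?ggE ?UE ?sgnE; ring | ].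
all: apply: (U_inj h2); rewrite ?U0rhs ?U1rhs ?U2rhs ?U3rhs !hfd ?piE ?chiE ?chi1E ?U0M ?U1M ?U2M ?U3M ?ggE ?UE ?sgnE; ring.
Qed.

Lemma bw_c_i1i0i2 (phi : A -> A) (theta : A) : lin_on_basis phi i1 i0 i2 (gg k i0) (gg k i1) (gg k i2) -> (exists s : bool, theta = sc (sgn k s) (e k + gg k i2) \/ theta = sc (sgn k s) (gg k i1 + gg k i0)) -> extended_structure phi theta.
Proof.
case=> hl he hi hj hk hth.
case: (@swap_hyps_v01_v10 k) => p1 p2 _ p5; case: (@id_hyps k) => _ _ p3 p4 _.
have hfd : forall v, phi (d v) = sc (chi1 k v) (d (piS v01 v10 v)).
  move=> v; case: (V_cases v) => ->; rewrite ?piE ?chiE ?chi1E ?sc1 ?scN1; [exact: he | exact: hj | exact: hi | exact: hk].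
have [hf hinvo] := psi_frob p1 p2 p3 p4 p5 hl hfd.
have uph0 : forall c, U0 (phi c) = U0 c.
  move=> c; rewrite (U0lin hl) !hfd ?piE ?chiE ?chi1E ?UE /U0; ring.
have uph1 : forall c, U1 (phi c) = U2 c.
  move=> c; rewrite (U1lin hl) !hfd ?piE ?chiE ?chi1E ?UE /U2; ring.
have uph2 : forall c, U2 (phi c) = U1 c.
  move=> c; rewrite (U2lin hl) !hfd ?piE ?chiE ?chi1E ?UE /U1; ring.
have uph3 : forall c, U3 (phi c) = U3 c.
  move=> c; rewrite (U3lin hl) !hfd ?piE ?chiE ?chi1E ?UE /U3; ring.
case: hth => s [->|->]; case: s.
all: split; [by split | move=> a; apply: (U_inj h2); [rewrite uph0 | rewrite uph1 | rewrite uph2 | rewrite uph3]; rewrite ?U0M ?U1M ?U2M ?U3M ?ggE ?UE ?sgnE; ring | ].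
all: apply: (U_inj h2); rewrite ?U0rhs ?U1rhs ?U2rhs ?U3rhs !hfd ?piE ?chiE ?chi1E ?U0M ?U1M ?U2M ?U3M ?ggE ?UE ?sgnE; ring.
Qed.

Lemma bw_d_i1i0i2 (phi : A -> A) (theta : A) : lin_on_basis phi i1 i0 i2 (- gg k i0) (- gg k i1) (gg k i2) -> (exists s : bool, theta = sc (sgn k s) (e k - gg k i2) \/ theta = sc (sgn k s) (gg k i1 - gg k i0)) -> extended_structure phi theta.
Proof.
case=> hl he hi hj hk hth.
case: (@swap_hyps_v01_v10 k) => p1 p2 p5 _; case: (@chiL_hyps_v11 k) => p3 p4 _.
have hfd : forall v, phi (d v) = sc (chiL k v11 v) (d (piS v01 v10 v)).
  move=> v; case: (V_cases v) => ->; rewrite ?piE ?chiE ?chi1E ?sc1 ?scN1; [exact: he | exact: hj | exact: hi | exact: hk].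
have [hf hinvo] := psi_frob p1 p2 p3 p4 p5 hl hfd.
have uph0 : forall c, U0 (phi c) = U3 c.
  move=> c; rewrite (U0lin hl) !hfd ?piE ?chiE ?chi1E ?UE /U3; ring.
have uph1 : forall c, U1 (phi c) = U1 c.
  move=> c; rewrite (U1lin hl) !hfd ?piE ?chiE ?chi1E ?UE /U1; ring.
have uph2 : forall c, U2 (phi c) = U2 c.
  move=> c; rewrite (U2lin hl) !hfd ?piE ?chiE ?chi1E ?UE /U2; ring.
have uph3 : forall c, U3 (phi c) = U0 c.
  move=> c; rewrite (U3lin hl) !hfd ?piE ?chiE ?chi1E ?UE /U0; ring.
case: hth => s [->|->]; case: s.
all: split; [by split | move=> a; apply: (U_inj h2); [rewrite uph0 | rewrite uph1 | rewrite uph2 | rewrite uph3]; rewrite ?U0M ?U1M ?U2M ?U3M ?ggE ?UE ?sgnE; ring | ].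
all: apply: (U_inj h2); rewrite ?U0rhs ?U1rhs ?U2rhs ?U3rhs !hfd ?piE ?chiE ?chi1E ?U0M ?U1M ?U2M ?U3M ?ggE ?UE ?sgnE; ring.
Qed.

Lemma bw_b_i1i2i0 (phi : A -> A) (theta : A) : lin_on_basis phi i1 i2 i0 (- gg k i1) (- gg k i2) (gg k i0) -> theta = 0 -> extended_structure phi theta.
Proof.
case=> hl he hi hj hk hth.
case: (@id_hyps k) => p1 p2 _ _ _; case: (@chiL_hyps_v10 k) => p3 p4 p5.
have hfd : forall v, phi (d v) = sc (chiL k v10 v) (d (id v)).
  move=> v; case: (V_cases v) => ->; rewrite ?piE ?chiE ?chi1E ?sc1 ?scN1; [exact: he | exact: hk | exact: hi | exact: hj].
have [hf hinvo] := psi_frob p1 p2 p3 p4 p5 hl hfd.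
have uph0 : forall c, U0 (phi c) = U2 c.
  move=> c; rewrite (U0lin hl) !hfd ?piE ?chiE ?chi1E ?UE /U2; ring.
have uph1 : forall c, U1 (phi c) = U3 c.
  move=> c; rewrite (U1lin hl) !hfd ?piE ?chiE ?chi1E ?UE /U3; ring.
have uph2 : forall c, U2 (phi c) = U0 c.
  move=> c; rewrite (U2lin hl) !hfd ?piE ?chiE ?chi1E ?UE /U0; ring.
have uph3 : forall c, U3 (phi c) = U1 c.
  move=> c; rewrite (U3lin hl) !hfd ?piE ?chiE ?chi1E ?UE /U1; ring.
subst theta.
all: split; [by split | move=> a; apply: (U_inj h2); [rewrite uph0 | rewrite uph1 | rewrite uph2 | rewrite uph3]; rewrite ?U0M ?U1M ?U2M ?U3M ?ggE ?UE ?sgnE; ring | ].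
all: apply: (U_inj h2); rewrite ?U0rhs ?U1rhs ?U2rhs ?U3rhs !hfd ?piE ?chiE ?chi1E ?U0M ?U1M ?U2M ?U3M ?ggE ?UE ?sgnE; ring.
Qed.

Lemma bw_c_i1i2i0 (phi : A -> A) (theta : A) : lin_on_basis phi i1 i2 i0 (gg k i2) (gg k i1) (gg k i0) -> (exists s : bool, theta = sc (sgn k s) (e k + gg k i0) \/ theta = sc (sgn k s) (gg k i1 + gg k i2)) -> extended_structure phi theta.
Proof.
case=> hl he hi hj hk hth.
case: (@swap_hyps_v01_v11 k) => p1 p2 _ p5; case: (@id_hyps k) => _ _ p3 p4 _.
have hfd : forall v, phi (d v) = sc (chi1 k v) (d (piS v01 v11 v)).
  move=> v; case: (V_cases v) => ->; rewrite ?piE ?chiE ?chi1E ?sc1 ?scN1; [exact: he | exact: hk | exact: hi | exact: hj].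
have [hf hinvo] := psi_frob p1 p2 p3 p4 p5 hl hfd.
have uph0 : forall c, U0 (phi c) = U0 c.
  move=> c; rewrite (U0lin hl) !hfd ?piE ?chiE ?chi1E ?UE /U0; ring.
have uph1 : forall c, U1 (phi c) = U3 c.
  move=> c; rewrite (U1lin hl) !hfd ?piE ?chiE ?chi1E ?UE /U3; ring.
have uph2 : forall c, U2 (phi c) = U2 c.
  move=> c; rewrite (U2lin hl) !hfd ?piE ?chiE ?chi1E ?UE /U2; ring.
have uph3 : forall c, U3 (phi c) = U1 c.
  move=> c; rewrite (U3lin hl) !hfd ?piE ?chiE ?chi1E ?UE /U1; ring.
case: hth => s [->|->]; case: s.
all: split; [by split | move=> a; apply: (U_inj h2); [rewrite uph0 | rewrite uph1 | rewrite uph2 | rewrite uph3]; rewrite ?U0M ?U1M ?U2M ?U3M ?ggE ?UE ?sgnE; ring | ].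
all: apply: (U_inj h2); rewrite ?U0rhs ?U1rhs ?U2rhs ?U3rhs !hfd ?piE ?chiE ?chi1E ?U0M ?U1M ?U2M ?U3M ?ggE ?UE ?sgnE; ring.
Qed.

Lemma bw_d_i1i2i0 (phi : A -> A) (theta : A) : lin_on_basis phi i1 i2 i0 (- gg k i2) (- gg k i1) (gg k i0) -> (exists s : bool, theta = sc (sgn k s) (e k - gg k i0) \/ theta = sc (sgn k s) (gg k i1 - gg k i2)) -> extended_structure phi theta.
Proof.
case=> hl he hi hj hk hth.
case: (@swap_hyps_v01_v11 k) => p1 p2 p5 _; case: (@chiL_hyps_v10 k) => p3 p4 _.
have hfd : forall v, phi (d v) = sc (chiL k v10 v) (d (piS v01 v11 v)).
  move=> v; case: (V_cases v) => ->; rewrite ?piE ?chiE ?chi1E ?sc1 ?scN1; [exact: he | exact: hk | exact: hi | exact: hj].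
have [hf hinvo] := psi_frob p1 p2 p3 p4 p5 hl hfd.
have uph0 : forall c, U0 (phi c) = U2 c.
  move=> c; rewrite (U0lin hl) !hfd ?piE ?chiE ?chi1E ?UE /U2; ring.
have uph1 : forall c, U1 (phi c) = U1 c.
  move=> c; rewrite (U1lin hl) !hfd ?piE ?chiE ?chi1E ?UE /U1; ring.
have uph2 : forall c, U2 (phi c) = U0 c.
  move=> c; rewrite (U2lin hl) !hfd ?piE ?chiE ?chi1E ?UE /U0; ring.
have uph3 : forall c, U3 (phi c) = U3 c.
  move=> c; rewrite (U3lin hl) !hfd ?piE ?chiE ?chi1E ?UE /U3; ring.
case: hth => s [->|->]; case: s.
all: split; [by split | move=> a; apply: (U_inj h2); [rewrite uph0 | rewrite uph1 | rewrite uph2 | rewrite uph3]; rewrite ?U0M ?U1M ?U2M ?U3M ?ggE ?UE ?sgnE; ring | ].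
all: apply: (U_inj h2); rewrite ?U0rhs ?U1rhs ?U2rhs ?U3rhs !hfd ?piE ?chiE ?chi1E ?U0M ?U1M ?U2M ?U3M ?ggE ?UE ?sgnE; ring.
Qed.

Lemma bw_b_i2i0i1 (phi : A -> A) (theta : A) : lin_on_basis phi i2 i0 i1 (- gg k i2) (- gg k i0) (gg k i1) -> theta = 0 -> extended_structure phi theta.
Proof.
case=> hl he hi hj hk hth.
case: (@id_hyps k) => p1 p2 _ _ _; case: (@chiL_hyps_v01 k) => p3 p4 p5.
have hfd : forall v, phi (d v) = sc (chiL k v01 v) (d (id v)).
  move=> v; case: (V_cases v) => ->; rewrite ?piE ?chiE ?chi1E ?sc1 ?scN1; [exact: he | exact: hj | exact: hk | exact: hi].
have [hf hinvo] := psi_frob p1 p2 p3 p4 p5 hl hfd.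
have uph0 : forall c, U0 (phi c) = U1 c.
  move=> c; rewrite (U0lin hl) !hfd ?piE ?chiE ?chi1E ?UE /U1; ring.
have uph1 : forall c, U1 (phi c) = U0 c.
  move=> c; rewrite (U1lin hl) !hfd ?piE ?chiE ?chi1E ?UE /U0; ring.
have uph2 : forall c, U2 (phi c) = U3 c.
  move=> c; rewrite (U2lin hl) !hfd ?piE ?chiE ?chi1E ?UE /U3; ring.
have uph3 : forall c, U3 (phi c) = U2 c.
  move=> c; rewrite (U3lin hl) !hfd ?piE ?chiE ?chi1E ?UE /U2; ring.
subst theta.
all: split; [by split | move=> a; apply: (U_inj h2); [rewrite uph0 | rewrite uph1 | rewrite uph2 | rewrite uph3]; rewrite ?U0M ?U1M ?U2M ?U3M ?ggE ?UE ?sgnE; ring | ].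
all: apply: (U_inj h2); rewrite ?U0rhs ?U1rhs ?U2rhs ?U3rhs !hfd ?piE ?chiE ?chi1E ?U0M ?U1M ?U2M ?U3M ?ggE ?UE ?sgnE; ring.
Qed.

Lemma bw_c_i2i0i1 (phi : A -> A) (theta : A) : lin_on_basis phi i2 i0 i1 (gg k i0) (gg k i2) (gg k i1) -> (exists s : bool, theta = sc (sgn k s) (e k + gg k i1) \/ theta = sc (sgn k s) (gg k i2 + gg k i0)) -> extended_structure phi theta.
Proof.
case=> hl he hi hj hk hth.
case: (@swap_hyps_v10_v11 k) => p1 p2 _ p5; case: (@id_hyps k) => _ _ p3 p4 _.
have hfd : forall v, phi (d v) = sc (chi1 k v) (d (piS v10 v11 v)).
  move=> v; case: (V_cases v) => ->; rewrite ?piE ?chiE ?chi1E ?sc1 ?scN1; [exact: he | exact: hj | exact: hk | exact: hi].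
have [hf hinvo] := psi_frob p1 p2 p3 p4 p5 hl hfd.
have uph0 : forall c, U0 (phi c) = U0 c.
  move=> c; rewrite (U0lin hl) !hfd ?piE ?chiE ?chi1E ?UE /U0; ring.
have uph1 : forall c, U1 (phi c) = U1 c.
  move=> c; rewrite (U1lin hl) !hfd ?piE ?chiE ?chi1E ?UE /U1; ring.
have uph2 : forall c, U2 (phi c) = U3 c.
  move=> c; rewrite (U2lin hl) !hfd ?piE ?chiE ?chi1E ?UE /U3; ring.
have uph3 : forall c, U3 (phi c) = U2 c.
  move=> c; rewrite (U3lin hl) !hfd ?piE ?chiE ?chi1E ?UE /U2; ring.
case: hth => s [->|->]; case: s.
all: split; [by split | move=> a; apply: (U_inj h2); [rewrite uph0 | rewrite uph1 | rewrite uph2 | rewrite uph3]; rewrite ?U0M ?U1M ?U2M ?U3M ?ggE ?UE ?sgnE; ring | ].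
all: apply: (U_inj h2); rewrite ?U0rhs ?U1rhs ?U2rhs ?U3rhs !hfd ?piE ?chiE ?chi1E ?U0M ?U1M ?U2M ?U3M ?ggE ?UE ?sgnE; ring.
Qed.

Lemma bw_d_i2i0i1 (phi : A -> A) (theta : A) : lin_on_basis phi i2 i0 i1 (- gg k i0) (- gg k i2) (gg k i1) -> (exists s : bool, theta = sc (sgn k s) (e k - gg k i1) \/ theta = sc (sgn k s) (gg k i2 - gg k i0)) -> extended_structure phi theta.
Proof.
case=> hl he hi hj hk hth.
case: (@swap_hyps_v10_v11 k) => p1 p2 p5 _; case: (@chiL_hyps_v01 k) => p3 p4 _.
have hfd : forall v, phi (d v) = sc (chiL k v01 v) (d (piS v10 v11 v)).
  move=> v; case: (V_cases v) => ->; rewrite ?piE ?chiE ?chi1E ?sc1 ?scN1; [exact: he | exact: hj | exact: hk | exact: hi].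
have [hf hinvo] := psi_frob p1 p2 p3 p4 p5 hl hfd.
have uph0 : forall c, U0 (phi c) = U1 c.
  move=> c; rewrite (U0lin hl) !hfd ?piE ?chiE ?chi1E ?UE /U1; ring.
have uph1 : forall c, U1 (phi c) = U0 c.
  move=> c; rewrite (U1lin hl) !hfd ?piE ?chiE ?chi1E ?UE /U0; ring.
have uph2 : forall c, U2 (phi c) = U2 c.
  move=> c; rewrite (U2lin hl) !hfd ?piE ?chiE ?chi1E ?UE /U2; ring.
have uph3 : forall c, U3 (phi c) = U3 c.
  move=> c; rewrite (U3lin hl) !hfd ?piE ?chiE ?chi1E ?UE /U3; ring.
case: hth => s [->|->]; case: s.
all: split; [by split | move=> a; apply: (U_inj h2); [rewrite uph0 | rewrite uph1 | rewrite uph2 | rewrite uph3]; rewrite ?U0M ?U1M ?U2M ?U3M ?ggE ?UE ?sgnE; ring | ].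
all: apply: (U_inj h2); rewrite ?U0rhs ?U1rhs ?U2rhs ?U3rhs !hfd ?piE ?chiE ?chi1E ?U0M ?U1M ?U2M ?U3M ?ggE ?UE ?sgnE; ring.
Qed.

Lemma bw_b_i2i1i0 (phi : A -> A) (theta : A) : lin_on_basis phi i2 i1 i0 (- gg k i2) (- gg k i1) (gg k i0) -> theta = 0 -> extended_structure phi theta.
Proof.
case=> hl he hi hj hk hth.
case: (@id_hyps k) => p1 p2 _ _ _; case: (@chiL_hyps_v10 k) => p3 p4 p5.
have hfd : forall v, phi (d v) = sc (chiL k v10 v) (d (id v)).
  move=> v; case: (V_cases v) => ->; rewrite ?piE ?chiE ?chi1E ?sc1 ?scN1; [exact: he | exact: hk | exact: hj | exact: hi].
have [hf hinvo] := psi_frob p1 p2 p3 p4 p5 hl hfd.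
have uph0 : forall c, U0 (phi c) = U2 c.
  move=> c; rewrite (U0lin hl) !hfd ?piE ?chiE ?chi1E ?UE /U2; ring.
have uph1 : forall c, U1 (phi c) = U3 c.
  move=> c; rewrite (U1lin hl) !hfd ?piE ?chiE ?chi1E ?UE /U3; ring.
have uph2 : forall c, U2 (phi c) = U0 c.
  move=> c; rewrite (U2lin hl) !hfd ?piE ?chiE ?chi1E ?UE /U0; ring.
have uph3 : forall c, U3 (phi c) = U1 c.
  move=> c; rewrite (U3lin hl) !hfd ?piE ?chiE ?chi1E ?UE /U1; ring.
subst theta.
all: split; [by split | move=> a; apply: (U_inj h2); [rewrite uph0 | rewrite uph1 | rewrite uph2 | rewrite uph3]; rewrite ?U0M ?U1M ?U2M ?U3M ?ggE ?UE ?sgnE; ring | ].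
all: apply: (U_inj h2); rewrite ?U0rhs ?U1rhs ?U2rhs ?U3rhs !hfd ?piE ?chiE ?chi1E ?U0M ?U1M ?U2M ?U3M ?ggE ?UE ?sgnE; ring.
Qed.

Lemma bw_c_i2i1i0 (phi : A -> A) (theta : A) : lin_on_basis phi i2 i1 i0 (gg k i1) (gg k i2) (gg k i0) -> (exists s : bool, theta = sc (sgn k s) (e k + gg k i0) \/ theta = sc (sgn k s) (gg k i2 + gg k i1)) -> extended_structure phi theta.
Proof.
case=> hl he hi hj hk hth.
case: (@swap_hyps_v01_v11 k) => p1 p2 _ p5; case: (@id_hyps k) => _ _ p3 p4 _.
have hfd : forall v, phi (d v) = sc (chi1 k v) (d (piS v01 v11 v)).
  move=> v; case: (V_cases v) => ->; rewrite ?piE ?chiE ?chi1E ?sc1 ?scN1; [exact: he | exact: hk | exact: hj | exact: hi].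
have [hf hinvo] := psi_frob p1 p2 p3 p4 p5 hl hfd.
have uph0 : forall c, U0 (phi c) = U0 c.
  move=> c; rewrite (U0lin hl) !hfd ?piE ?chiE ?chi1E ?UE /U0; ring.
have uph1 : forall c, U1 (phi c) = U3 c.
  move=> c; rewrite (U1lin hl) !hfd ?piE ?chiE ?chi1E ?UE /U3; ring.
have uph2 : forall c, U2 (phi c) = U2 c.
  move=> c; rewrite (U2lin hl) !hfd ?piE ?chiE ?chi1E ?UE /U2; ring.
have uph3 : forall c, U3 (phi c) = U1 c.
  move=> c; rewrite (U3lin hl) !hfd ?piE ?chiE ?chi1E ?UE /U1; ring.
case: hth => s [->|->]; case: s.
all: split; [by split | move=> a; apply: (U_inj h2); [rewrite uph0 | rewrite uph1 | rewrite uph2 | rewrite uph3]; rewrite ?U0M ?U1M ?U2M ?U3M ?ggE ?UE ?sgnE; ring | ].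
all: apply: (U_inj h2); rewrite ?U0rhs ?U1rhs ?U2rhs ?U3rhs !hfd ?piE ?chiE ?chi1E ?U0M ?U1M ?U2M ?U3M ?ggE ?UE ?sgnE; ring.
Qed.

Lemma bw_d_i2i1i0 (phi : A -> A) (theta : A) : lin_on_basis phi i2 i1 i0 (- gg k i1) (- gg k i2) (gg k i0) -> (exists s : bool, theta = sc (sgn k s) (e k - gg k i0) \/ theta = sc (sgn k s) (gg k i2 - gg k i1)) -> extended_structure phi theta.
Proof.
case=> hl he hi hj hk hth.
case: (@swap_hyps_v01_v11 k) => p1 p2 p5 _; case: (@chiL_hyps_v10 k) => p3 p4 _.
have hfd : forall v, phi (d v) = sc (chiL k v10 v) (d (piS v01 v11 v)).
  move=> v; case: (V_cases v) => ->; rewrite ?piE ?chiE ?chi1E ?sc1 ?scN1; [exact: he | exact: hk | exact: hj | exact: hi].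
have [hf hinvo] := psi_frob p1 p2 p3 p4 p5 hl hfd.
have uph0 : forall c, U0 (phi c) = U2 c.
  move=> c; rewrite (U0lin hl) !hfd ?piE ?chiE ?chi1E ?UE /U2; ring.
have uph1 : forall c, U1 (phi c) = U1 c.
  move=> c; rewrite (U1lin hl) !hfd ?piE ?chiE ?chi1E ?UE /U1; ring.
have uph2 : forall c, U2 (phi c) = U0 c.
  move=> c; rewrite (U2lin hl) !hfd ?piE ?chiE ?chi1E ?UE /U0; ring.
have uph3 : forall c, U3 (phi c) = U3 c.
  move=> c; rewrite (U3lin hl) !hfd ?piE ?chiE ?chi1E ?UE /U3; ring.
case: hth => s [->|->]; case: s.
all: split; [by split | move=> a; apply: (U_inj h2); [rewrite uph0 | rewrite uph1 | rewrite uph2 | rewrite uph3]; rewrite ?U0M ?U1M ?U2M ?U3M ?ggE ?UE ?sgnE; ring | ].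
all: apply: (U_inj h2); rewrite ?U0rhs ?U1rhs ?U2rhs ?U3rhs !hfd ?piE ?chiE ?chi1E ?U0M ?U1M ?U2M ?U3M ?ggE ?UE ?sgnE; ring.
Qed.

Lemma backward (phi : A -> A) (theta : A) : classification phi theta -> extended_structure phi theta.
Proof.
case => [[hid [i [j [l [hd hth]]]]] | [i [j [l [hd hcase]]]]].
{ have hl : is_linear phi by move=> c a b; rewrite !hid.
  have [hf hinvo] : frobenius_morphism phi /\ (forall a, phi (phi a) = a).
    case: (@id_hyps k) => a1 a2 a3 a4 a5; apply: (psi_frob a1 a2 a3 a4 a5 hl) => v; by rewrite hid chi1E sc1.
  split; [by split | by move=> a; rewrite hid | ].
  case: (I3_cases i) => ?; subst i; case: (I3_cases j) => ?; subst j; case: (I3_cases l) => ?; subst l; try by case: hd.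
  all: case: hth => s [t [->|->|->|->]]; case: s; case: t.
  all: apply: (U_inj h2); rewrite ?U0rhs ?U1rhs ?U2rhs ?U3rhs !hid ?U0M ?U1M ?U2M ?U3M ?ggE ?UE ?sgnE; ring. }
case: (I3_cases i) => ?; subst i; case: (I3_cases j) => ?; subst j; case: (I3_cases l) => ?; subst l; try by case: hd.
{ case: hcase => [[hL ->] | [hL hth] | [hL hth]]; [exact: bw_b_i0i1i2 hL erefl | exact: bw_c_i0i1i2 hL hth | exact: bw_d_i0i1i2 hL hth]. }
{ case: hcase => [[hL ->] | [hL hth] | [hL hth]]; [exact: bw_b_i0i2i1 hL erefl | exact: bw_c_i0i2i1 hL hth | exact: bw_d_i0i2i1 hL hth]. }
{ case: hcase => [[hL ->] | [hL hth] | [hL hth]]; [exact: bw_b_i1i0i2 hL erefl | exact: bw_c_i1i0i2 hL hth | exact: bw_d_i1i0i2 hL hth]. }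
{ case: hcase => [[hL ->] | [hL hth] | [hL hth]]; [exact: bw_b_i1i2i0 hL erefl | exact: bw_c_i1i2i0 hL hth | exact: bw_d_i1i2i0 hL hth]. }
{ case: hcase => [[hL ->] | [hL hth] | [hL hth]]; [exact: bw_b_i2i0i1 hL erefl | exact: bw_c_i2i0i1 hL hth | exact: bw_d_i2i0i1 hL hth]. }
{ case: hcase => [[hL ->] | [hL hth] | [hL hth]]; [exact: bw_b_i2i1i0 hL erefl | exact: bw_c_i2i1i0 hL hth | exact: bw_d_i2i1i0 hL hth]. }
Qed.
End U.

Theorem mainTheorem8 (k : closedFieldType) (hchar : [pchar k] =i pred0)
    (phi : A k -> A k) (theta : A k) :
  extended_structure phi theta <-> classification phi theta.
Proof.
have h2 : (2 : k) != 0 by rewrite ((pcharf0P k).1 hchar 2).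
split; [exact: (forward h2) | exact: (backward h2)].
Qed.
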